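(* Let $k\ge1$ and let $x=(X_1,\dots,X_k)$, $y=(Y_1,\dots,Y_k)$ be elements of $\mathrm M_2(\mathbb Z)^k$ such that every entry of every $X_i$ and $Y_i$ lies in $\{0,1\}$. If the reductions of $x,y$ modulo $2$ generate $\mathrm M_2(\mathbb F_2)^k$ as an $\mathbb F_2$-algebra, then $x,y$ generate $\mathrm M_2(\mathbb Z)^k$ as a ring. In particular, the ring $\mathrm M_2(\mathbb Z)^{16}$ can be generated by $2$ elements.
   Context: Generation is as unital associative algebra (ring): the non-commutative monomials in the generators (including $1$) span the algebra as a module over the base ring. *)

(* Defs.v *)
From HB Require Import structures.
From mathcomp Require Import all_boot all_order all_algebra.
Set Implicit Arguments. Unset Strict Implicit. Unset Printing Implicit Defensive.
Import Order.TTheory GRing.Theory Num.Theory.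
Local Open Scope ring_scope.

Definition M2Zk (k : nat) := {ffun 'I_k -> 'M[int]_2}.
Definition M2F2k (k : nat) := {ffun 'I_k -> 'M['F_2]_2}.

Definition word_eval (A : pzRingType) (w : seq A) : A := \prod_(g <- w) g.

Definition ring_generates (A : pzRingType) (gens : seq A) : Prop :=
  forall a : A, exists l : seq (int * seq A),
    (forall p, p \in l -> {subset p.2 <= gens}) /\
    a = \sum_(p <- l) (word_eval p.2 *~ p.1).

Definition F2alg_generates (k : nat) (gens : seq (M2F2k k)) : Prop :=
  forall a : M2F2k k, exists l : seq ('F_2 * seq (M2F2k k)),
    (forall p, p \in l -> {subset p.2 <= gens}) /\
    a = \sum_(p <- l) (p.1 *: word_eval p.2).

Definition red2 (k : nat) (x : M2Zk k) : M2F2k k :=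
  [ffun i => map_mx (fun z : int => (z%:~R : 'F_2)) (x i)].

Definition entries01 (k : nat) (x : M2Zk k) : Prop :=
  forall (i : 'I_k) (r c : 'I_2), x i r c = 0 \/ x i r c = 1.

(* Main.v *)
Require Import Defs.
From HB Require Import structures.
From mathcomp Require Import all_boot all_order all_algebra.
Import Order.TTheory GRing.Theory Num.Theory.
Local Open Scope ring_scope.
Set Implicit Arguments. Unset Strict Implicit.

Section GenSec.
Variable A : pzRingType.
Variable gens : seq A.

Definition Gen (a : A) : Prop :=
  exists l : seq (int * seq A),
    (forall p, p \in l -> {subset p.2 <= gens}) /\
    a = \sum_(p <- l) (word_eval p.2 *~ p.1).

Lemma word_eval_cat (s1 s2 : seq A) : word_eval (s1 ++ s2) = word_eval s1 * word_eval s2.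
Proof. by rewrite /word_eval big_cat. Qed.

Lemma Gen0 : Gen 0.
Proof. by exists [::]; split => //; rewrite big_nil. Qed.

Lemma GenD a b : Gen a -> Gen b -> Gen (a + b).
Proof.
move=> [l1 [H1 ->]] [l2 [H2 ->]]; exists (l1 ++ l2); split; last by rewrite big_cat.
by move=> p; rewrite mem_cat => /orP [/H1|/H2].
Qed.

Lemma GenN a : Gen a -> Gen (- a).
Proof.
move=> [l [H ->]]; exists [seq (- p.1, p.2) | p <- l]; split.
  by move=> p /mapP [q Hq ->] /=; apply: H.
by rewrite big_map -sumrN; apply: eq_bigr => p _ /=; rewrite mulrNz.
Qed.

Lemma GenC (z : int) : Gen (z%:~R).
Proof.
exists [:: (z, [::])]; split.
  by move=> p; rewrite inE => /eqP -> /=.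
by rewrite big_cons big_nil addr0 /word_eval big_nil.
Qed.

Lemma Gen_g g : g \in gens -> Gen g.
Proof.
move=> Hg; exists [:: (1, [:: g])]; split.
  by move=> p; rewrite inE => /eqP -> /= h; rewrite inE => /eqP ->.
by rewrite big_cons big_nil addr0 /word_eval big_cons big_nil mulr1 mulr1z.
Qed.

Lemma GenM a b : Gen a -> Gen b -> Gen (a * b).
Proof.
move=> [l1 [H1 ->]] [l2 [H2 ->]].
exists [seq (p.1 * q.1, p.2 ++ q.2) | p <- l1, q <- l2]; split.
  move=> p /allpairsP [[p1 q1] [Hp Hq ->]] /= g; rewrite mem_cat => /orP [].
    by apply: H1.
  by apply: H2.
rewrite big_allpairs_dep mulr_suml; apply: eq_bigr => p _.
rewrite mulr_sumr; apply: eq_bigr => q _ /=.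
by rewrite word_eval_cat mulrzAl mulrzAr -mulrzA mulrC.
Qed.
End GenSec.
Inductive ex := eX | eY | eC of int | eAdd of ex & ex | eMul of ex & ex | eNeg of ex.

Fixpoint evalR (R : pzRingType) (a b : R) (e : ex) : R :=
  match e with
  | eX => a | eY => b | eC z => z%:~R
  | eAdd e1 e2 => evalR a b e1 + evalR a b e2
  | eMul e1 e2 => evalR a b e1 * evalR a b e2
  | eNeg e1 => - evalR a b e1
  end.

Lemma Gen_eval (R : pzRingType) (a b : R) e : Gen [:: a; b] (evalR a b e).
Proof.
elim: e => /=.
- by apply: Gen_g; rewrite inE eqxx.
- by apply: Gen_g; rewrite !inE eqxx orbT.
- by move=> z; apply: GenC.
- by move=> e1 H1 e2 H2; apply: GenD.
- by move=> e1 H1 e2 H2; apply: GenM.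
- by move=> e1 H1; apply: GenN.
Qed.

Lemma evalR_ffun k (x y : M2Zk k) e i : (evalR x y e) i = evalR (x i) (y i) e.
Proof.
elim: e => //=.
- by move=> z; rewrite ffunMzE ffunE.
- by move=> e1 H1 e2 H2; rewrite ffunE H1 H2.
- by move=> e1 H1 e2 H2; rewrite ffunE H1 H2.
- by move=> e1 H1; rewrite ffunE H1.
Qed.
Definition mx4 (R : pzRingType) (a b c d : R) : 'M[R]_2 :=
  \matrix_(i < 2, j < 2) if (i : nat) == 0%N then (if (j : nat) == 0%N then a else b)
                                  else (if (j : nat) == 0%N then c else d).
Lemma mx4_mul (R : pzRingType) (a b c d a' b' c' d' : R) :
  mx4 a b c d * mx4 a' b' c' d' = mx4 (a*a' + b*c') (a*b'+b*d') (c*a'+d*c') (c*b'+d*d').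
Proof. rewrite -mulmxE; apply/matrixP => i j; rewrite !mxE !big_ord_recl big_ord0 !mxE addr0 /=.
by case: i => [[|[|i]] Hi] //; case: j => [[|[|j]] Hj] //=; rewrite !mxE. Qed.
Lemma mx4_add (R : pzRingType) (a b c d a' b' c' d' : R) :
  mx4 a b c d + mx4 a' b' c' d' = mx4 (a+a') (b+b') (c+c') (d+d').
Proof. apply/matrixP => i j; rewrite !mxE.
by case: i => [[|[|i]] Hi] //; case: j => [[|[|j]] Hj] //=. Qed.
Lemma mx4_opp (R : pzRingType) (a b c d : R) :
  - mx4 a b c d = mx4 (-a) (-b) (-c) (-d).
Proof. apply/matrixP => i j; rewrite !mxE.
by case: i => [[|[|i]] Hi] //; case: j => [[|[|j]] Hj] //=. Qed.
Lemma mx4_cst (R : pzRingType) (z : int) :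
  (z%:~R : 'M[R]_2) = mx4 z%:~R 0 0 z%:~R.
Proof. have -> : (z%:~R : 'M[R]_2) = (z%:~R)%:M by rewrite (rmorph_int (@scalar_mx R 2)).
apply/matrixP => i j; rewrite !mxE.
by case: i => [[|[|i]] Hi] //; case: j => [[|[|j]] Hj] //=.
Qed.
Definition i4 := (int * int * int * int)%type.
Definition mxI (v : i4) : 'M[int]_2 := let '(a,b,c,d) := v in mx4 a b c d.
Definition add4 (u v : i4) : i4 :=
  let '(a,b,c,d) := u in let '(a',b',c',d') := v in (a+a', b+b', c+c', d+d').
Definition mul4 (u v : i4) : i4 :=
  let '(a,b,c,d) := u in let '(a',b',c',d') := v in
  (a*a' + b*c', a*b'+b*d', c*a'+d*c', c*b'+d*d').
Definition neg4 (u : i4) : i4 := let '(a,b,c,d) := u in (-a,-b,-c,-d).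
Definition cst4 (z : int) : i4 := (z, 0, 0, z).

Fixpoint evalT (a b : i4) (e : ex) : i4 :=
  match e with
  | eX => a | eY => b | eC z => cst4 z
  | eAdd e1 e2 => add4 (evalT a b e1) (evalT a b e2)
  | eMul e1 e2 => mul4 (evalT a b e1) (evalT a b e2)
  | eNeg e1 => neg4 (evalT a b e1)
  end.

Lemma evalT_mx a b e : mxI (evalT a b e) = evalR (mxI a) (mxI b) e.
Proof.
elim: e => //=.
- by move=> z; rewrite mx4_cst intz.
- move=> e1 <- e2 <-; case: (evalT a b e1) => [[[? ?] ?] ?]; case: (evalT a b e2) => [[[? ?] ?] ?].
  by rewrite /= mx4_add.
- move=> e1 <- e2 <-; case: (evalT a b e1) => [[[? ?] ?] ?]; case: (evalT a b e2) => [[[? ?] ?] ?].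
  by rewrite /= mx4_mul.
- move=> e1 <-; case: (evalT a b e1) => [[[? ?] ?] ?].
  by rewrite /= mx4_opp.
Qed.

Definition b4 := (bool * bool * bool * bool)%type.
Definition bF (b : bool) : 'F_2 := (b : nat)%:R.
Definition mxF (v : b4) : 'M['F_2]_2 := let '(a,b,c,d) := v in mx4 (bF a) (bF b) (bF c) (bF d).
Definition mulB (u v : b4) : b4 :=
  let '(a,b,c,d) := u in let '(a',b',c',d') := v in
  ((a && a') (+) (b && c'), (a && b') (+) (b && d'), (c && a') (+) (d && c'), (c && b') (+) (d && d')).
Definition addB (u v : b4) : b4 :=
  let '(a,b,c,d) := u in let '(a',b',c',d') := v in (a (+) a', b (+) b', c (+) c', d (+) d').
Definition oneB : b4 := (true, false, false, true).
Definition zeroB : b4 := (false, false, false, false).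

Lemma bF_mul a b c d : bF ((a && b) (+) (c && d)) = bF a * bF b + bF c * bF d.
Proof. by case: a; case: b; case: c; case: d; rewrite /bF /= ?mulr0 ?mul0r ?mulr1 ?addr0 ?add0r //; apply/eqP. Qed.
Lemma bF_add a b : bF (a (+) b) = bF a + bF b.
Proof. by case: a; case: b; rewrite /bF /= ?addr0 ?add0r //; apply/eqP. Qed.

Lemma mxF_mul u v : mxF (mulB u v) = mxF u * mxF v.
Proof. case: u => [[[? ?] ?] ?]; case: v => [[[? ?] ?] ?]. by rewrite /= mx4_mul !bF_mul. Qed.
Lemma mxF_add u v : mxF (addB u v) = mxF u + mxF v.
Proof. case: u => [[[? ?] ?] ?]; case: v => [[[? ?] ?] ?]. by rewrite /= mx4_add !bF_add. Qed.
Lemma mxF_one : mxF oneB = 1.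
Proof. by apply/matrixP => i j; rewrite !mxE; case: i => [[|[|i]] Hi] //; case: j => [[|[|j]] Hj]. Qed.
Lemma mxF_zero : mxF zeroB = 0.
Proof. by apply/matrixP => i j; rewrite !mxE; case: (_ == _); case: (_ == _). Qed.

Lemma bF_inj : injective bF.
Proof. by case; case => //; move/eqP; rewrite /bF /= ?eq_sym oner_eq0. Qed.
Lemma mxF_inj : injective mxF.
Proof.
case=> [[[a b] c] d]; case=> [[[a' b'] c'] d'] /= /matrixP H.
have:= H 0 0; have:= H 0 1; have:= H 1 0; have := H 1 1; rewrite !mxE /=.
by move=> /bF_inj -> /bF_inj -> /bF_inj -> /bF_inj ->.
Qed.

Lemma F2_cases (c : 'F_2) : c = 0 \/ c = 1.
Proof. case: c => [[|[|n]] Hn]; [left|right|by []]; by apply/val_inj. Qed.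

Lemma mxF_surj (M : 'M['F_2]_2) : exists v, M = mxF v.
Proof.
have E c : exists b, c = bF b by case: (F2_cases c) => ->; [exists false|exists true].
have [a Ha] := E (M 0 0); have [b Hb] := E (M 0 1); have [c Hc] := E (M 1 0); have [d Hd] := E (M 1 1).
exists (a,b,c,d); apply/matrixP => i j; rewrite !mxE.
by case: i => [[|[|i]] Hi] //; case: j => [[|[|j]] Hj] //=;
  [rewrite -Ha|rewrite -Hb|rewrite -Hc|rewrite -Hd]; congr (M _ _); apply/val_inj.
Qed.

Definition b2i (b : bool) : int := (b : nat)%:Z.
Definition toI (v : b4) : i4 := let '(a,b,c,d) := v in (b2i a, b2i b, b2i c, b2i d).

Lemma red_toI v : map_mx (fun z : int => (z%:~R : 'F_2)) (mxI (toI v)) = mxF v.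
Proof.
case: v => [[[a b] c] d]; apply/matrixP => i j; rewrite !mxE.
by case: (_ == _); case: (_ == _); rewrite /b2i /bF -pmulrn.
Qed.
Definition ty := (b4 * b4)%type.
Definition decB4 (n : nat) : b4 := (odd n, odd n./2, odd n./2./2, odd n./2./2./2).
Definition decT (n : nat) : ty := (decB4 n, decB4 (n %/ 16)).
Definition codeB (v : b4) : nat := let '(a,b,c,d) := v in (a + 2 * b + 4 * c + 8 * d)%N.
Definition codeT (t : ty) : nat := (codeB t.1 + 16 * codeB t.2)%N.

Lemma decT_code t : decT (codeT t) = t.
Proof. by case: t => [[[[a b] c] d] [[[a' b'] c'] d']]; case: a; case: b; case: c; case: d;
  case: a'; case: b'; case: c'; case: d'; vm_compute. Qed.
Lemma codeT_lt t : (codeT t < 256)%N.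
Proof. by case: t => [[[[a b] c] d] [[[a' b'] c'] d']]; case: a; case: b; case: c; case: d;
  case: a'; case: b'; case: c'; case: d'; vm_compute. Qed.
Definition goodL : seq bool := [:: false; false; false; false; false; false; false; false; false; false; false; false; false; false; false; false; false; false; false; false; false; false; true; true; false; false; false; false; false; false; true; true; false; false; false; false; true; true; true; true; false; false; false; false; true; true; true; true; false; false; false; false; true; false; false; true; false; false; false; false; false; true; true; false; false; false; true; true; false; false; true; true; false; false; true; true; false; false; true; true; false; false; true; false; false; false; false; true; false; false; false; true; false; false; true; false; false; true; true; false; true; false; false; true; true; false; false; true; false; true; true; false; false; true; true; true; true; true; true; false; true; false; true; true; true; true; false; true; false; false; false; false; false; false; true; true; false; false; false; false; false; false; true; true; false; false; false; false; false; false; false; false; false; false; false; false; false; false; false; false; false; false; false; false; true; false; false; true; false; false; false; false; false; true; true; false; false; false; false; false; true; true; true; true; false; false; false; false; true; true; true; true; false; false; true; false; false; false; false; true; false; false; false; true; false; false; true; false; false; false; true; true; false; false; true; true; false; false; true; true; false; false; true; true; false; true; true; true; true; true; true; false; true; false; true; true; true; true; false; true; false; true; true; false; true; false; false; true; true; false; false; true; false; true; true; false].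
Definition repL : seq nat := [:: 0; 0; 0; 0; 0; 0; 0; 0; 0; 0; 0; 0; 0; 0; 0; 0; 0; 0; 0; 0; 0; 0; 22; 23; 0; 0; 0; 0; 0; 0; 30; 31; 0; 0; 0; 0; 36; 37; 38; 39; 0; 0; 0; 0; 37; 38; 39; 36; 0; 0; 0; 0; 31; 0; 0; 30; 0; 0; 0; 0; 0; 22; 23; 0; 0; 0; 36; 37; 0; 0; 38; 39; 0; 0; 37; 38; 0; 0; 39; 36; 0; 0; 31; 0; 0; 0; 0; 30; 0; 0; 0; 22; 0; 0; 23; 0; 0; 97; 98; 0; 98; 0; 0; 103; 97; 0; 0; 107; 0; 107; 103; 0; 0; 113; 114; 115; 114; 115; 118; 0; 115; 0; 113; 118; 113; 118; 0; 114; 0; 0; 0; 0; 0; 0; 22; 30; 0; 0; 0; 0; 0; 0; 23; 31; 0; 0; 0; 0; 0; 0; 0; 0; 0; 0; 0; 0; 0; 0; 0; 0; 0; 0; 0; 0; 31; 0; 0; 23; 0; 0; 0; 0; 0; 22; 30; 0; 0; 0; 0; 0; 98; 97; 107; 103; 0; 0; 0; 0; 97; 107; 103; 98; 0; 0; 31; 0; 0; 0; 0; 23; 0; 0; 0; 22; 0; 0; 30; 0; 0; 0; 98; 97; 0; 0; 107; 103; 0; 0; 97; 107; 0; 0; 103; 98; 0; 115; 114; 113; 114; 113; 118; 0; 113; 0; 115; 118; 115; 118; 0; 114; 0; 37; 36; 0; 36; 0; 0; 39; 37; 0; 0; 38; 0; 38; 39; 0].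
Definition gL : seq b4 := [:: oneB; oneB; oneB; oneB; oneB; oneB; oneB; oneB; oneB; oneB; oneB; oneB; oneB; oneB; oneB; oneB; oneB; oneB; oneB; oneB; oneB; oneB; (true,false,false,true); (true,false,false,true); oneB; oneB; oneB; oneB; oneB; oneB; (true,false,false,true); (true,false,false,true); oneB; oneB; oneB; oneB; (true,false,false,true); (true,false,false,true); (true,false,false,true); (true,false,false,true); oneB; oneB; oneB; oneB; (true,true,false,true); (true,true,false,true); (true,true,false,true); (true,true,false,true); oneB; oneB; oneB; oneB; (true,true,false,true); oneB; oneB; (true,true,false,true); oneB; oneB; oneB; oneB; oneB; (true,true,false,true); (true,true,false,true); oneB; oneB; oneB; (false,true,true,false); (false,true,true,true); oneB; oneB; (false,true,true,false); (false,true,true,true); oneB; oneB; (false,true,true,false); (false,true,true,true); oneB; oneB; (false,true,true,false); (false,true,true,true); oneB; oneB; (true,false,true,true); oneB; oneB; oneB; oneB; (true,false,true,true); oneB; oneB; oneB; (true,false,true,true); oneB; oneB; (true,false,true,true); oneB; oneB; (true,false,false,true); (true,false,false,true); oneB; (false,true,true,false); oneB; oneB; (true,false,false,true); (false,true,true,false); oneB; oneB; (true,false,false,true); oneB; (false,true,true,false); (false,true,true,false); oneB; oneB; (true,false,false,true); (true,false,false,true); (true,false,false,true); (false,true,true,true); (true,true,true,false); (true,false,false,true); oneB; (false,true,true,true); oneB; (true,true,true,false); (false,true,true,true); (false,true,true,true); (true,true,true,false); oneB; (true,true,true,false); oneB; oneB; oneB; oneB; oneB; oneB; (false,true,true,false);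 (false,true,true,false); oneB; oneB; oneB; oneB; oneB; oneB; (false,true,true,false); (false,true,true,false); oneB; oneB; oneB; oneB; oneB; oneB; oneB; oneB; oneB; oneB; oneB; oneB; oneB; oneB; oneB; oneB; oneB; oneB; oneB; oneB; (true,true,true,false); oneB; oneB; (true,true,true,false); oneB; oneB; oneB; oneB; oneB; (true,true,true,false); (true,true,true,false); oneB; oneB; oneB; oneB; oneB; (false,true,true,true); (true,false,true,true); (true,false,true,true); (false,true,true,true); oneB; oneB; oneB; oneB; (false,true,true,true); (false,true,true,true); (true,false,true,true); (true,false,true,true); oneB; oneB; (false,true,true,true); oneB; oneB; oneB; oneB; (false,true,true,true); oneB; oneB; oneB; (false,true,true,true); oneB; oneB; (false,true,true,true); oneB; oneB; oneB; (true,true,false,true); (true,true,false,true); oneB; oneB; (true,true,true,false); (true,true,true,false); oneB; oneB; (true,true,true,false); (true,true,false,true); oneB; oneB; (true,true,false,true); (true,true,true,false); oneB; (true,true,false,true); (true,true,false,true); (true,true,false,true); (false,true,true,false); (true,false,true,true); (false,true,true,false); oneB; (false,true,true,false); oneB; (true,false,true,true); (true,false,true,true); (false,true,true,false); (true,true,false,true); oneB; (true,false,true,true); oneB; (true,false,true,true); (true,true,true,false); oneB; (true,false,true,true); oneB; oneB; (true,true,true,false); (true,true,true,false); oneB; oneB; (true,false,true,true); oneB; (true,true,true,false); (true,false,true,true); oneB].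
Definition giL : seq b4 := [:: oneB; oneB; oneB; oneB; oneB; oneB; oneB; oneB; oneB; oneB; oneB; oneB; oneB; oneB; oneB; oneB; oneB; oneB; oneB; oneB; oneB; oneB; (true,false,false,true); (true,false,false,true); oneB; oneB; oneB; oneB; oneB; oneB; (true,false,false,true); (true,false,false,true); oneB; oneB; oneB; oneB; (true,false,false,true); (true,false,false,true); (true,false,false,true); (true,false,false,true); oneB; oneB; oneB; oneB; (true,true,false,true); (true,true,false,true); (true,true,false,true); (true,true,false,true); oneB; oneB; oneB; oneB; (true,true,false,true); oneB; oneB; (true,true,false,true); oneB; oneB; oneB; oneB; oneB; (true,true,false,true); (true,true,false,true); oneB; oneB; oneB; (false,true,true,false); (true,true,true,false); oneB; oneB; (false,true,true,false); (true,true,true,false); oneB; oneB; (false,true,true,false); (true,true,true,false); oneB; oneB; (false,true,true,false); (true,true,true,false); oneB; oneB; (true,false,true,true); oneB; oneB; oneB; oneB; (true,false,true,true); oneB; oneB; oneB; (true,false,true,true); oneB; oneB; (true,false,true,true); oneB; oneB; (true,false,false,true); (true,false,false,true); oneB; (false,true,true,false); oneB; oneB; (true,false,false,true); (false,true,true,false); oneB; oneB; (true,false,false,true); oneB; (false,true,true,false); (false,true,true,false); oneB; oneB; (true,false,false,true); (true,false,false,true); (true,false,false,true); (true,true,true,false); (false,true,true,true); (true,false,false,true); oneB; (true,true,true,false); oneB; (false,true,true,true); (true,true,true,false); (true,true,true,false); (false,true,true,true); oneB; (false,true,true,true); oneB; oneB; oneB; oneB; oneB; oneB; (false,true,true,false);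 (false,true,true,false); oneB; oneB; oneB; oneB; oneB; oneB; (false,true,true,false); (false,true,true,false); oneB; oneB; oneB; oneB; oneB; oneB; oneB; oneB; oneB; oneB; oneB; oneB; oneB; oneB; oneB; oneB; oneB; oneB; oneB; oneB; (false,true,true,true); oneB; oneB; (false,true,true,true); oneB; oneB; oneB; oneB; oneB; (false,true,true,true); (false,true,true,true); oneB; oneB; oneB; oneB; oneB; (true,true,true,false); (true,false,true,true); (true,false,true,true); (true,true,true,false); oneB; oneB; oneB; oneB; (true,true,true,false); (true,true,true,false); (true,false,true,true); (true,false,true,true); oneB; oneB; (true,true,true,false); oneB; oneB; oneB; oneB; (true,true,true,false); oneB; oneB; oneB; (true,true,true,false); oneB; oneB; (true,true,true,false); oneB; oneB; oneB; (true,true,false,true); (true,true,false,true); oneB; oneB; (false,true,true,true); (false,true,true,true); oneB; oneB; (false,true,true,true); (true,true,false,true); oneB; oneB; (true,true,false,true); (false,true,true,true); oneB; (true,true,false,true); (true,true,false,true); (true,true,false,true); (false,true,true,false); (true,false,true,true); (false,true,true,false); oneB; (false,true,true,false); oneB; (true,false,true,true); (true,false,true,true); (false,true,true,false); (true,true,false,true); oneB; (true,false,true,true); oneB; (true,false,true,true); (false,true,true,true); oneB; (true,false,true,true); oneB; oneB; (false,true,true,true); (false,true,true,true); oneB; oneB; (true,false,true,true); oneB; (false,true,true,true); (true,false,true,true); oneB].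
Definition SVL : seq (seq int) := [:: [::];
 [::];
 [::];
 [::];
 [::];
 [::];
 [::];
 [::];
 [::];
 [::];
 [::];
 [::];
 [::];
 [::];
 [::];
 [::];
 [::];
 [::];
 [::];
 [::];
 [::];
 [::];
 [:: (Posz 0); (Posz 0); (Negz 0); (Posz 0); (Posz 0); (Posz 0); (Posz 0); (Posz 0); (Posz 0)];
 [:: (Posz 1); (Negz 0); (Negz 0); (Posz 0); (Posz 0); (Posz 0); (Posz 1); (Posz 0); (Posz 0)];
 [::];
 [::];
 [::];
 [::];
 [::];
 [::];
 [:: (Posz 0); (Posz 0); (Negz 0); (Negz 0); (Posz 0); (Posz 1); (Posz 1); (Posz 1); (Posz 0)];
 [:: (Posz 1); (Negz 1); (Negz 0); (Posz 0); (Posz 0); (Posz 1); (Posz 0); (Posz 1); (Posz 0)];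
 [::];
 [::];
 [::];
 [::];
 [:: (Posz 1); (Posz 0); (Posz 0); (Posz 0); (Posz 0); (Posz 1); (Posz 0); (Posz 0); (Posz 0)];
 [:: (Posz 1); (Negz 0); (Posz 0); (Posz 0); (Posz 0); (Posz 1); (Posz 0); (Posz 0); (Posz 0)];
 [:: (Posz 1); (Posz 0); (Posz 0); (Negz 0); (Posz 0); (Posz 1); (Posz 0); (Posz 0); (Posz 0)];
 [:: (Posz 1); (Negz 0); (Posz 0); (Negz 0); (Posz 0); (Posz 1); (Negz 0); (Posz 0); (Posz 0)];
 [::];
 [::];
 [::];
 [::];
 [:: (Posz 1); (Negz 0); (Posz 0); (Posz 0); (Posz 0); (Posz 1); (Posz 0); (Posz 0); (Posz 0)];
 [:: (Posz 1); (Negz 1); (Posz 0); (Posz 1); (Posz 0); (Posz 1); (Posz 2); (Posz 0); (Posz 0)];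
 [:: (Posz 1); (Negz 0); (Posz 0); (Negz 0); (Posz 0); (Posz 1); (Negz 0); (Posz 0); (Posz 0)];
 [:: (Posz 1); (Negz 1); (Posz 0); (Posz 0); (Posz 0); (Posz 1); (Posz 0); (Posz 0); (Posz 0)];
 [::];
 [::];
 [::];
 [::];
 [:: (Posz 1); (Posz 0); (Negz 0); (Posz 0); (Posz 0); (Posz 1); (Posz 0); (Posz 1); (Posz 0)];
 [::];
 [::];
 [:: (Posz 2); (Posz 0); (Negz 0); (Negz 0); (Posz 0); (Posz 1); (Negz 0); (Posz 1); (Posz 0)];
 [::];
 [::];
 [::];
 [::];
 [::];
 [:: (Posz 2); (Negz 1); (Negz 0); (Posz 0); (Posz 0); (Posz 0); (Posz 2); (Posz 0); (Posz 0)];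
 [:: (Posz 1); (Negz 0); (Negz 0); (Posz 0); (Posz 0); (Posz 0); (Posz 1); (Posz 0); (Posz 0)];
 [::];
 [::];
 [::];
 [:: (Posz 1); (Posz 0); (Posz 0); (Posz 0); (Posz 0); (Posz 1); (Posz 0); (Posz 0); (Posz 0)];
 [:: (Posz 1); (Negz 0); (Posz 0); (Posz 0); (Posz 0); (Posz 1); (Posz 0); (Posz 0); (Posz 0)];
 [::];
 [::];
 [:: (Posz 1); (Posz 0); (Posz 0); (Negz 0); (Posz 0); (Posz 1); (Posz 0); (Posz 0); (Posz 0)];
 [:: (Posz 1); (Negz 0); (Posz 0); (Negz 0); (Posz 0); (Posz 1); (Negz 0); (Posz 0); (Posz 0)];
 [::];
 [::];
 [:: (Posz 1); (Negz 0); (Posz 0); (Posz 0); (Posz 0); (Posz 1); (Posz 0); (Posz 0); (Posz 0)];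
 [:: (Posz 1); (Negz 1); (Posz 0); (Posz 1); (Posz 0); (Posz 1); (Posz 2); (Posz 0); (Posz 0)];
 [::];
 [::];
 [:: (Posz 1); (Negz 0); (Posz 0); (Negz 0); (Posz 0); (Posz 1); (Negz 0); (Posz 0); (Posz 0)];
 [:: (Posz 1); (Negz 1); (Posz 0); (Posz 0); (Posz 0); (Posz 1); (Posz 0); (Posz 0); (Posz 0)];
 [::];
 [::];
 [:: (Posz 1); (Posz 0); (Negz 0); (Posz 0); (Posz 0); (Posz 1); (Posz 0); (Posz 1); (Posz 0)];
 [::];
 [::];
 [::];
 [::];
 [:: (Posz 2); (Posz 0); (Negz 0); (Negz 0); (Posz 0); (Posz 1); (Negz 0); (Posz 1); (Posz 0)];
 [::];
 [::];
 [::];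
 [:: (Posz 2); (Negz 1); (Negz 0); (Posz 0); (Posz 0); (Posz 0); (Posz 2); (Posz 0); (Posz 0)];
 [::];
 [::];
 [:: (Posz 1); (Negz 0); (Negz 0); (Posz 0); (Posz 0); (Posz 0); (Posz 1); (Posz 0); (Posz 0)];
 [::];
 [::];
 [:: (Posz 0); (Negz 0); (Posz 0); (Posz 0); (Posz 1); (Posz 0); (Posz 0); (Posz 1); (Posz 0)];
 [:: (Posz 1); (Posz 0); (Posz 0); (Posz 0); (Posz 1); (Posz 1); (Posz 0); (Posz 0); (Posz 1)];
 [::];
 [:: (Posz 1); (Posz 0); (Posz 0); (Posz 0); (Posz 1); (Posz 1); (Posz 0); (Posz 0); (Posz 1)];
 [::];
 [::];
 [:: (Posz 0); (Posz 0); (Negz 1); (Posz 2); (Negz 0); (Negz 1); (Posz 1); (Posz 1); (Negz 1)];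
 [:: (Posz 0); (Negz 0); (Posz 0); (Posz 0); (Posz 1); (Posz 0); (Posz 0); (Posz 1); (Posz 0)];
 [::];
 [::];
 [:: (Posz 0); (Posz 0); (Posz 2); (Posz 1); (Negz 0); (Posz 1); (Posz 2); (Negz 1); (Posz 1)];
 [::];
 [:: (Posz 0); (Posz 0); (Posz 2); (Posz 1); (Negz 0); (Posz 1); (Posz 2); (Negz 1); (Posz 1)];
 [:: (Posz 0); (Posz 0); (Negz 1); (Posz 2); (Negz 0); (Negz 1); (Posz 1); (Posz 1); (Negz 1)];
 [::];
 [::];
 [:: (Posz 1); (Negz 0); (Negz 0); (Posz 0); (Posz 1); (Posz 0); (Posz 0); (Posz 1); (Negz 0)];
 [:: (Posz 1); (Posz 0); (Negz 0); (Posz 0); (Posz 1); (Posz 1); (Posz 0); (Posz 1); (Posz 1)];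
 [:: (Posz 2); (Negz 0); (Posz 0); (Posz 0); (Posz 1); (Posz 1); (Posz 0); (Posz 0); (Posz 2)];
 [:: (Posz 1); (Posz 0); (Negz 0); (Posz 0); (Posz 1); (Posz 1); (Posz 0); (Posz 1); (Posz 1)];
 [:: (Posz 2); (Negz 0); (Posz 0); (Posz 0); (Posz 1); (Posz 1); (Posz 0); (Posz 0); (Posz 2)];
 [:: (Posz 0); (Negz 1); (Posz 0); (Posz 2); (Negz 1); (Negz 1); (Posz 0); (Negz 1); (Negz 1)];
 [::];
 [:: (Posz 0); (Negz 0); (Posz 0); (Posz 0); (Posz 1); (Posz 1); (Posz 0); (Posz 2); (Posz 0)];
 [::];
 [:: (Posz 1); (Negz 0); (Negz 0); (Posz 0); (Posz 1); (Posz 0); (Posz 0); (Posz 1); (Negz 0)];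
 [:: (Posz 2); (Posz 0); (Posz 0); (Posz 0); (Negz 1); (Posz 0); (Posz 2); (Negz 1); (Posz 2)];
 [:: (Posz 1); (Negz 0); (Negz 0); (Posz 0); (Posz 1); (Posz 0); (Posz 0); (Posz 1); (Negz 0)];
 [:: (Posz 2); (Posz 0); (Posz 0); (Posz 0); (Negz 1); (Posz 0); (Posz 2); (Negz 1); (Posz 2)];
 [::];
 [:: (Posz 3); (Negz 1); (Negz 2); (Posz 0); (Posz 1); (Negz 0); (Posz 0); (Posz 1); (Negz 2)];
 [::];
 [::];
 [::];
 [::];
 [::];
 [::];
 [:: (Posz 0); (Posz 0); (Negz 0); (Posz 0); (Posz 0); (Posz 0); (Posz 0); (Posz 0); (Posz 0)];
 [:: (Posz 0); (Posz 0); (Negz 0); (Negz 0); (Posz 0); (Posz 1); (Posz 1); (Posz 1); (Posz 0)];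
 [::];
 [::];
 [::];
 [::];
 [::];
 [::];
 [:: (Posz 1); (Negz 0); (Negz 0); (Posz 0); (Posz 0); (Posz 0); (Posz 1); (Posz 0); (Posz 0)];
 [:: (Posz 1); (Negz 1); (Negz 0); (Posz 0); (Posz 0); (Posz 1); (Posz 0); (Posz 1); (Posz 0)];
 [::];
 [::];
 [::];
 [::];
 [::];
 [::];
 [::];
 [::];
 [::];
 [::];
 [::];
 [::];
 [::];
 [::];
 [::];
 [::];
 [::];
 [::];
 [::];
 [::];
 [:: (Posz 1); (Posz 0); (Negz 0); (Posz 0); (Posz 0); (Posz 1); (Posz 0); (Posz 1); (Posz 0)];
 [::];
 [::];
 [:: (Posz 1); (Negz 0); (Negz 0); (Posz 0); (Posz 0); (Posz 0); (Posz 1); (Posz 0); (Posz 0)];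
 [::];
 [::];
 [::];
 [::];
 [::];
 [:: (Posz 2); (Negz 1); (Negz 0); (Posz 0); (Posz 0); (Posz 0); (Posz 2); (Posz 0); (Posz 0)];
 [:: (Posz 2); (Posz 0); (Negz 0); (Negz 0); (Posz 0); (Posz 1); (Negz 0); (Posz 1); (Posz 0)];
 [::];
 [::];
 [::];
 [::];
 [::];
 [:: (Posz 1); (Posz 0); (Negz 1); (Posz 0); (Negz 0); (Posz 1); (Posz 0); (Posz 2); (Negz 0)];
 [:: (Posz 2); (Negz 0); (Negz 1); (Posz 0); (Negz 0); (Posz 0); (Posz 0); (Posz 1); (Negz 1)];
 [:: (Posz 0); (Posz 2); (Posz 0); (Negz 0); (Negz 2); (Posz 1); (Posz 0); (Posz 2); (Negz 0)];
 [:: (Posz 2); (Posz 0); (Posz 0); (Posz 0); (Negz 2); (Posz 0); (Negz 0); (Posz 1); (Negz 1)];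
 [::];
 [::];
 [::];
 [::];
 [:: (Posz 2); (Negz 0); (Negz 1); (Posz 0); (Negz 0); (Posz 0); (Posz 0); (Posz 1); (Negz 1)];
 [:: (Posz 2); (Negz 1); (Negz 1); (Negz 0); (Posz 1); (Negz 0); (Posz 2); (Posz 0); (Negz 2)];
 [:: (Posz 2); (Posz 0); (Posz 0); (Posz 0); (Negz 2); (Posz 0); (Negz 0); (Posz 1); (Negz 1)];
 [:: (Posz 3); (Negz 1); (Posz 0); (Posz 0); (Negz 0); (Negz 0); (Posz 0); (Posz 0); (Negz 2)];
 [::];
 [::];
 [:: (Posz 1); (Posz 0); (Negz 0); (Posz 0); (Posz 0); (Posz 1); (Posz 0); (Posz 1); (Posz 0)];
 [::];
 [::];
 [::];
 [::];
 [:: (Posz 1); (Negz 0); (Negz 0); (Posz 0); (Posz 0); (Posz 0); (Posz 1); (Posz 0); (Posz 0)];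
 [::];
 [::];
 [::];
 [:: (Posz 2); (Negz 1); (Negz 0); (Posz 0); (Posz 0); (Posz 0); (Posz 2); (Posz 0); (Posz 0)];
 [::];
 [::];
 [:: (Posz 2); (Posz 0); (Negz 0); (Negz 0); (Posz 0); (Posz 1); (Negz 0); (Posz 1); (Posz 0)];
 [::];
 [::];
 [::];
 [:: (Posz 1); (Posz 0); (Negz 1); (Posz 0); (Negz 0); (Posz 1); (Posz 0); (Posz 2); (Negz 0)];
 [:: (Posz 2); (Negz 0); (Negz 1); (Posz 0); (Negz 0); (Posz 0); (Posz 0); (Posz 1); (Negz 1)];
 [::];
 [::];
 [:: (Posz 0); (Posz 2); (Posz 0); (Negz 0); (Negz 2); (Posz 1); (Posz 0); (Posz 2); (Negz 0)];
 [:: (Posz 2); (Posz 0); (Posz 0); (Posz 0); (Negz 2); (Posz 0); (Negz 0); (Posz 1); (Negz 1)];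
 [::];
 [::];
 [:: (Posz 2); (Negz 0); (Negz 1); (Posz 0); (Negz 0); (Posz 0); (Posz 0); (Posz 1); (Negz 1)];
 [:: (Posz 2); (Negz 1); (Negz 1); (Negz 0); (Posz 1); (Negz 0); (Posz 2); (Posz 0); (Negz 2)];
 [::];
 [::];
 [:: (Posz 2); (Posz 0); (Posz 0); (Posz 0); (Negz 2); (Posz 0); (Negz 0); (Posz 1); (Negz 1)];
 [:: (Posz 3); (Negz 1); (Posz 0); (Posz 0); (Negz 0); (Negz 0); (Posz 0); (Posz 0); (Negz 2)];
 [::];
 [:: (Posz 0); (Negz 0); (Posz 0); (Posz 0); (Posz 1); (Posz 1); (Posz 0); (Posz 2); (Posz 0)];
 [:: (Posz 1); (Posz 0); (Negz 0); (Posz 0); (Posz 1); (Posz 1); (Posz 0); (Posz 1); (Posz 1)];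
 [:: (Posz 1); (Negz 0); (Negz 0); (Posz 0); (Posz 1); (Posz 0); (Posz 0); (Posz 1); (Negz 0)];
 [:: (Posz 1); (Posz 0); (Negz 0); (Posz 0); (Posz 1); (Posz 1); (Posz 0); (Posz 1); (Posz 1)];
 [:: (Posz 1); (Negz 0); (Negz 0); (Posz 0); (Posz 1); (Posz 0); (Posz 0); (Posz 1); (Negz 0)];
 [:: (Posz 0); (Negz 1); (Posz 0); (Posz 2); (Negz 1); (Negz 1); (Posz 0); (Negz 1); (Negz 1)];
 [::];
 [:: (Posz 1); (Negz 0); (Negz 0); (Posz 0); (Posz 1); (Posz 0); (Posz 0); (Posz 1); (Negz 0)];
 [::];
 [:: (Posz 2); (Negz 0); (Posz 0); (Posz 0); (Posz 1); (Posz 1); (Posz 0); (Posz 0); (Posz 2)];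
 [:: (Posz 2); (Posz 0); (Posz 0); (Posz 0); (Negz 1); (Posz 0); (Posz 2); (Negz 1); (Posz 2)];
 [:: (Posz 2); (Negz 0); (Posz 0); (Posz 0); (Posz 1); (Posz 1); (Posz 0); (Posz 0); (Posz 2)];
 [:: (Posz 2); (Posz 0); (Posz 0); (Posz 0); (Negz 1); (Posz 0); (Posz 2); (Negz 1); (Posz 2)];
 [::];
 [:: (Posz 3); (Negz 1); (Negz 2); (Posz 0); (Posz 1); (Negz 0); (Posz 0); (Posz 1); (Negz 2)];
 [::];
 [:: (Posz 1); (Negz 0); (Negz 1); (Posz 0); (Posz 0); (Posz 1); (Posz 0); (Posz 2); (Posz 0)];
 [:: (Posz 1); (Posz 0); (Negz 1); (Posz 0); (Posz 0); (Posz 1); (Posz 0); (Posz 2); (Posz 0)];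
 [::];
 [:: (Posz 1); (Posz 0); (Negz 1); (Posz 0); (Posz 0); (Posz 1); (Posz 0); (Posz 2); (Posz 0)];
 [::];
 [::];
 [:: (Posz 3); (Negz 2); (Negz 1); (Posz 1); (Posz 0); (Negz 0); (Posz 1); (Negz 1); (Posz 0)];
 [:: (Posz 1); (Negz 0); (Negz 1); (Posz 0); (Posz 0); (Posz 1); (Posz 0); (Posz 2); (Posz 0)];
 [::];
 [::];
 [:: (Posz 3); (Posz 0); (Negz 1); (Negz 0); (Posz 0); (Negz 0); (Posz 2); (Negz 1); (Posz 0)];
 [::];
 [:: (Posz 3); (Posz 0); (Negz 1); (Negz 0); (Posz 0); (Negz 0); (Posz 2); (Negz 1); (Posz 0)];
 [:: (Posz 3); (Negz 2); (Negz 1); (Posz 1); (Posz 0); (Negz 0); (Posz 1); (Negz 1); (Posz 0)];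
 [::]].
Definition SK : seq ex := [:: (eAdd (eMul (eAdd (eMul (eMul eX eY) (eMul (eMul eX eY) eX)) (eNeg (eMul (eMul (eMul eX eY) eX) (eMul eX eY)))) (eAdd (eMul (eMul eY eX) (eMul (eMul eY eX) eY)) (eNeg (eMul (eMul (eMul eY eX) eY) (eMul eY eX))))) (eMul (eAdd (eMul (eMul eY eX) (eMul (eMul eY eX) eY)) (eNeg (eMul (eMul (eMul eY eX) eY) (eMul eY eX)))) (eAdd (eMul (eMul eX eY) (eMul (eMul eX eY) eX)) (eNeg (eMul (eMul (eMul eX eY) eX) (eMul eX eY))))));
 (eAdd (eMul (eAdd (eMul eX (eMul (eMul eX eX) eY)) (eNeg (eMul (eMul (eMul eX eX) eY) eX))) (eAdd (eMul (eMul eY eX) (eMul (eMul eY eX) eY)) (eNeg (eMul (eMul (eMul eY eX) eY) (eMul eY eX))))) (eMul (eAdd (eMul (eMul eY eX) (eMul (eMul eY eX) eY)) (eNeg (eMul (eMul (eMul eY eX) eY) (eMul eY eX)))) (eAdd (eMul eX (eMul (eMul eX eX) eY)) (eNeg (eMul (eMul (eMul eX eX) eY) eX)))));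
 (eAdd (eMul (eAdd (eMul eY (eMul (eMul eX eY) eY)) (eNeg (eMul (eMul (eMul eX eY) eY) eY))) (eAdd (eMul (eMul eY eX) (eMul (eMul eX eY) eX)) (eNeg (eMul (eMul (eMul eX eY) eX) (eMul eY eX))))) (eMul (eAdd (eMul (eMul eY eX) (eMul (eMul eX eY) eX)) (eNeg (eMul (eMul (eMul eX eY) eX) (eMul eY eX)))) (eAdd (eMul eY (eMul (eMul eX eY) eY)) (eNeg (eMul (eMul (eMul eX eY) eY) eY)))));
 (eAdd (eMul (eAdd (eMul eX (eMul eX eY)) (eNeg (eMul (eMul eX eY) eX))) (eAdd (eMul (eMul eY eX) (eMul (eMul eY eX) eX)) (eNeg (eMul (eMul (eMul eY eX) eX) (eMul eY eX))))) (eMul (eAdd (eMul (eMul eY eX) (eMul (eMul eY eX) eX)) (eNeg (eMul (eMul (eMul eY eX) eX) (eMul eY eX)))) (eAdd (eMul eX (eMul eX eY)) (eNeg (eMul (eMul eX eY) eX)))));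
 (eAdd (eMul (eAdd (eMul (eMul eX eY) (eMul (eMul eX eY) eY)) (eNeg (eMul (eMul (eMul eX eY) eY) (eMul eX eY)))) (eAdd (eMul (eMul eY eX) (eMul (eMul eY eX) eY)) (eNeg (eMul (eMul (eMul eY eX) eY) (eMul eY eX))))) (eMul (eAdd (eMul (eMul eY eX) (eMul (eMul eY eX) eY)) (eNeg (eMul (eMul (eMul eY eX) eY) (eMul eY eX)))) (eAdd (eMul (eMul eX eY) (eMul (eMul eX eY) eY)) (eNeg (eMul (eMul (eMul eX eY) eY) (eMul eX eY))))));
 (eAdd (eMul (eAdd (eMul eX (eMul eX eY)) (eNeg (eMul (eMul eX eY) eX))) (eAdd (eMul eY (eMul eY eX)) (eNeg (eMul (eMul eY eX) eY)))) (eMul (eAdd (eMul eY (eMul eY eX)) (eNeg (eMul (eMul eY eX) eY))) (eAdd (eMul eX (eMul eX eY)) (eNeg (eMul (eMul eX eY) eX)))));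
 (eAdd (eMul (eAdd (eMul eX (eMul eX eY)) (eNeg (eMul (eMul eX eY) eX))) (eAdd (eMul eX (eMul (eMul eX eX) eY)) (eNeg (eMul (eMul (eMul eX eX) eY) eX)))) (eMul (eAdd (eMul eX (eMul (eMul eX eX) eY)) (eNeg (eMul (eMul (eMul eX eX) eY) eX))) (eAdd (eMul eX (eMul eX eY)) (eNeg (eMul (eMul eX eY) eX)))));
 (eAdd (eMul (eAdd (eMul eX (eMul eX eY)) (eNeg (eMul (eMul eX eY) eX))) (eAdd (eMul eY (eMul (eMul eY eY) eX)) (eNeg (eMul (eMul (eMul eY eY) eX) eY)))) (eMul (eAdd (eMul eY (eMul (eMul eY eY) eX)) (eNeg (eMul (eMul (eMul eY eY) eX) eY))) (eAdd (eMul eX (eMul eX eY)) (eNeg (eMul (eMul eX eY) eX)))));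
 (eAdd (eMul (eAdd (eMul eY (eMul eX eY)) (eNeg (eMul (eMul eX eY) eY))) (eAdd (eMul (eMul eX eY) (eMul (eMul eX eY) eY)) (eNeg (eMul (eMul (eMul eX eY) eY) (eMul eX eY))))) (eMul (eAdd (eMul (eMul eX eY) (eMul (eMul eX eY) eY)) (eNeg (eMul (eMul (eMul eX eY) eY) (eMul eX eY)))) (eAdd (eMul eY (eMul eX eY)) (eNeg (eMul (eMul eX eY) eY)))))].
Definition genL : seq (seq ex) := [:: [::];
 [::];
 [::];
 [::];
 [::];
 [::];
 [::];
 [::];
 [::];
 [::];
 [::];
 [::];
 [::];
 [::];
 [::];
 [::];
 [::];
 [::];
 [::];
 [::];
 [::];
 [::];
 [:: (eMul (eC (Posz 1)) eY); (eMul (eC (Posz 1)) (eMul eY eX)); (eMul (eC (Posz 1)) (eMul eX eY)); (eMul (eC (Posz 1)) (eMul (eMul eX eY) eX))];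
 [:: (eMul (eC (Posz 1)) eY); (eAdd (eMul (eC (Posz 1)) eX) (eMul (eC (Negz 0)) (eMul eX eY))); (eAdd (eMul (eC (Posz 1)) eX) (eMul (eC (Negz 0)) (eMul eY eX))); (eAdd (eMul (eC (Posz 1)) (eC (Posz 1))) (eMul (eC (Negz 0)) eY))];
 [::];
 [::];
 [::];
 [::];
 [::];
 [::];
 [:: (eMul (eC (Posz 1)) eY); (eMul (eC (Posz 1)) (eMul eY eX)); (eMul (eC (Posz 1)) (eMul eX eY)); (eMul (eC (Posz 1)) (eMul (eMul eX eY) eX))];
 [:: (eMul (eC (Posz 1)) eY); (eAdd (eMul (eC (Negz 0)) eY) (eMul (eC (Posz 1)) (eMul eY eX))); (eAdd (eMul (eC (Negz 0)) eY) (eMul (eC (Posz 1)) (eMul eX eY))); (eAdd (eMul (eC (Posz 1)) (eC (Posz 1))) (eMul (eC (Negz 0)) eY))];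
 [::];
 [::];
 [::];
 [::];
 [:: (eMul (eC (Posz 1)) (eMul eY eX)); (eMul (eC (Posz 1)) eY); (eMul (eC (Posz 1)) eX); (eMul (eC (Posz 1)) (eMul eX eY))];
 [:: (eMul (eC (Posz 1)) (eMul eY eX)); (eMul (eC (Posz 1)) eY); (eAdd (eMul (eC (Posz 1)) eX) (eMul (eC (Negz 0)) (eMul eY eX))); (eAdd (eMul (eC (Posz 1)) (eC (Posz 1))) (eMul (eC (Negz 0)) (eMul eY eX)))];
 [:: (eMul (eC (Posz 1)) (eMul eY eX)); (eMul (eC (Posz 1)) eY); (eMul (eC (Posz 1)) (eMul (eMul eX eY) eX)); (eMul (eC (Posz 1)) (eMul eX eY))];
 [:: (eMul (eC (Posz 1)) (eMul eY eX)); (eMul (eC (Posz 1)) eY); (eAdd (eMul (eC (Posz 1)) eX) (eMul (eC (Negz 0)) (eMul (eMul eY eX) eX))); (eAdd (eMul (eC (Posz 1)) (eC (Posz 1))) (eMul (eC (Negz 0)) (eMul eY eX)))];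
 [::];
 [::];
 [::];
 [::];
 [:: (eAdd (eMul (eC (Posz 1)) (eC (Posz 1))) (eMul (eC (Negz 0)) (eMul eX eY))); (eMul (eC (Posz 1)) eY); (eAdd (eMul (eC (Posz 1)) eX) (eMul (eC (Negz 0)) (eMul eX eY))); (eMul (eC (Posz 1)) (eMul eX eY))];
 [:: (eAdd (eMul (eC (Negz 0)) eY) (eMul (eC (Posz 1)) (eMul eY eX))); (eMul (eC (Posz 1)) eY); (eAdd (eMul (eC (Negz 0)) (eC (Posz 1))) (eMul (eC (Posz 1)) eX)); (eAdd (eMul (eC (Negz 0)) eY) (eMul (eC (Posz 1)) (eMul eX eY)))];
 [:: (eAdd (eMul (eC (Posz 1)) (eC (Posz 1))) (eMul (eC (Negz 0)) (eMul eX eY))); (eMul (eC (Posz 1)) eY); (eAdd (eMul (eC (Posz 1)) eX) (eMul (eC (Negz 0)) (eMul (eMul eX eX) eY))); (eMul (eC (Posz 1)) (eMul eX eY))];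
 [:: (eAdd (eMul (eC (Negz 0)) eY) (eMul (eC (Posz 1)) (eMul eY eX))); (eMul (eC (Posz 1)) eY); (eAdd (eAdd (eMul (eC (Negz 0)) (eC (Posz 1))) (eMul (eC (Posz 1)) eX)) (eMul (eC (Negz 0)) eY)); (eAdd (eMul (eC (Negz 0)) eY) (eMul (eC (Posz 1)) (eMul eX eY)))];
 [::];
 [::];
 [::];
 [::];
 [:: (eMul (eC (Posz 1)) (eMul eY eX)); (eAdd (eMul (eC (Posz 1)) eY) (eMul (eC (Negz 0)) (eMul eY eX))); (eMul (eC (Posz 1)) eX); (eAdd (eMul (eC (Posz 1)) (eC (Posz 1))) (eMul (eC (Negz 0)) (eMul eY eX)))];
 [::];
 [::];
 [:: (eAdd (eMul (eC (Negz 0)) eY) (eMul (eC (Posz 1)) (eMul eY eX))); (eAdd (eMul (eC (Posz 2)) eY) (eMul (eC (Negz 0)) (eMul eY eX))); (eAdd (eMul (eC (Posz 1)) eX) (eMul (eC (Negz 0)) eY)); (eAdd (eMul (eC (Negz 0)) eX) (eMul (eC (Posz 1)) (eMul eX eY)))];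
 [::];
 [::];
 [::];
 [::];
 [::];
 [:: (eAdd (eMul (eC (Negz 0)) eY) (eMul (eC (Posz 1)) (eMul eY eX))); (eAdd (eMul (eC (Negz 0)) eX) (eMul (eC (Posz 1)) (eMul eX eY))); (eAdd (eMul (eC (Negz 0)) (eC (Posz 1))) (eMul (eC (Posz 1)) eX)); (eAdd (eAdd (eMul (eC (Posz 1)) (eC (Posz 1))) (eMul (eC (Posz 1)) eY)) (eMul (eC (Negz 0)) (eMul eY eX)))];
 [:: (eAdd (eMul (eC (Negz 0)) eX) (eMul (eC (Posz 1)) (eMul (eMul eX eX) eY))); (eAdd (eMul (eC (Posz 1)) eX) (eMul (eC (Negz 0)) (eMul eX eY))); (eAdd (eMul (eC (Posz 2)) (eMul eX eY)) (eMul (eC (Negz 0)) (eMul (eMul eX eY) eX))); (eAdd (eMul (eC (Posz 1)) (eMul eX eX)) (eMul (eC (Negz 0)) (eMul (eMul eX eX) eY)))];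
 [::];
 [::];
 [::];
 [:: (eMul (eC (Posz 1)) (eMul eX eY)); (eMul (eC (Posz 1)) eX); (eMul (eC (Posz 1)) eY); (eMul (eC (Posz 1)) (eMul eY eX))];
 [:: (eMul (eC (Posz 1)) (eMul eX eY)); (eAdd (eMul (eC (Posz 1)) eX) (eMul (eC (Negz 0)) (eMul eX eY))); (eMul (eC (Posz 1)) eY); (eAdd (eMul (eC (Posz 1)) (eC (Posz 1))) (eMul (eC (Negz 0)) (eMul eX eY)))];
 [::];
 [::];
 [:: (eMul (eC (Posz 1)) (eMul eX eY)); (eMul (eC (Posz 1)) (eMul (eMul eX eY) eX)); (eMul (eC (Posz 1)) eY); (eMul (eC (Posz 1)) (eMul eY eX))];
 [:: (eMul (eC (Posz 1)) (eMul eX eY)); (eAdd (eMul (eC (Posz 1)) eX) (eMul (eC (Negz 0)) (eMul (eMul eX eX) eY))); (eMul (eC (Posz 1)) eY); (eAdd (eMul (eC (Posz 1)) (eC (Posz 1))) (eMul (eC (Negz 0)) (eMul eX eY)))];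
 [::];
 [::];
 [:: (eAdd (eMul (eC (Posz 1)) (eC (Posz 1))) (eMul (eC (Negz 0)) (eMul eY eX))); (eAdd (eMul (eC (Posz 1)) eX) (eMul (eC (Negz 0)) (eMul eY eX))); (eMul (eC (Posz 1)) eY); (eMul (eC (Posz 1)) (eMul eY eX))];
 [:: (eAdd (eMul (eC (Negz 0)) eY) (eMul (eC (Posz 1)) (eMul eX eY))); (eAdd (eMul (eC (Negz 0)) (eC (Posz 1))) (eMul (eC (Posz 1)) eX)); (eMul (eC (Posz 1)) eY); (eAdd (eMul (eC (Negz 0)) eY) (eMul (eC (Posz 1)) (eMul eY eX)))];
 [::];
 [::];
 [:: (eAdd (eMul (eC (Posz 1)) (eC (Posz 1))) (eMul (eC (Negz 0)) (eMul eY eX))); (eAdd (eMul (eC (Posz 1)) eX) (eMul (eC (Negz 0)) (eMul (eMul eY eX) eX))); (eMul (eC (Posz 1)) eY); (eMul (eC (Posz 1)) (eMul eY eX))];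
 [:: (eAdd (eMul (eC (Negz 0)) eY) (eMul (eC (Posz 1)) (eMul eX eY))); (eAdd (eAdd (eMul (eC (Negz 0)) (eC (Posz 1))) (eMul (eC (Posz 1)) eX)) (eMul (eC (Negz 0)) eY)); (eMul (eC (Posz 1)) eY); (eAdd (eMul (eC (Negz 0)) eY) (eMul (eC (Posz 1)) (eMul eY eX)))];
 [::];
 [::];
 [:: (eMul (eC (Posz 1)) (eMul eX eY)); (eMul (eC (Posz 1)) eX); (eAdd (eMul (eC (Posz 1)) eY) (eMul (eC (Negz 0)) (eMul eX eY))); (eAdd (eMul (eC (Posz 1)) (eC (Posz 1))) (eMul (eC (Negz 0)) (eMul eX eY)))];
 [::];
 [::];
 [::];
 [::];
 [:: (eAdd (eMul (eC (Negz 0)) eY) (eMul (eC (Posz 1)) (eMul eX eY))); (eAdd (eMul (eC (Posz 1)) eX) (eMul (eC (Negz 0)) eY)); (eAdd (eMul (eC (Posz 2)) eY) (eMul (eC (Negz 0)) (eMul eX eY))); (eAdd (eMul (eC (Negz 0)) eX) (eMul (eC (Posz 1)) (eMul eY eX)))];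
 [::];
 [::];
 [::];
 [:: (eAdd (eMul (eC (Negz 0)) eY) (eMul (eC (Posz 1)) (eMul eX eY))); (eAdd (eMul (eC (Negz 0)) (eC (Posz 1))) (eMul (eC (Posz 1)) eX)); (eAdd (eMul (eC (Negz 0)) eX) (eMul (eC (Posz 1)) (eMul eY eX))); (eAdd (eAdd (eMul (eC (Posz 1)) (eC (Posz 1))) (eMul (eC (Posz 1)) eY)) (eMul (eC (Negz 0)) (eMul eX eY)))];
 [::];
 [::];
 [:: (eAdd (eMul (eC (Negz 0)) eX) (eMul (eC (Posz 1)) (eMul (eMul eY eX) eX))); (eAdd (eMul (eC (Posz 2)) (eMul eY eX)) (eMul (eC (Negz 0)) (eMul (eMul eX eY) eX))); (eAdd (eMul (eC (Posz 1)) eX) (eMul (eC (Negz 0)) (eMul eY eX))); (eAdd (eMul (eC (Posz 1)) (eMul eX eX)) (eMul (eC (Negz 0)) (eMul (eMul eY eX) eX)))];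
 [::];
 [::];
 [:: (eMul (eC (Posz 1)) eX); (eMul (eC (Posz 1)) (eMul eX eY)); (eMul (eC (Posz 1)) (eMul eY eX)); (eMul (eC (Posz 1)) (eMul (eMul eY eX) eY))];
 [:: (eMul (eC (Posz 1)) (eMul eX eY)); (eMul (eC (Posz 1)) eX); (eMul (eC (Posz 1)) (eMul (eMul eY eX) eY)); (eMul (eC (Posz 1)) (eMul eY eX))];
 [::];
 [:: (eMul (eC (Posz 1)) (eMul eY eX)); (eMul (eC (Posz 1)) (eMul (eMul eY eX) eY)); (eMul (eC (Posz 1)) eX); (eMul (eC (Posz 1)) (eMul eX eY))];
 [::];
 [::];
 [:: (eAdd (eMul (eC (Posz 1)) eX) (eMul (eC (Negz 0)) eY)); (eAdd (eMul (eC (Negz 0)) (eC (Posz 1))) (eMul (eC (Posz 1)) (eMul eX eY))); (eAdd (eMul (eC (Negz 0)) (eC (Posz 1))) (eMul (eC (Posz 1)) (eMul eY eX))); (eAdd (eMul (eC (Negz 0)) eY) (eMul (eC (Posz 1)) (eMul (eMul eY eX) eY)))];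
 [:: (eMul (eC (Posz 1)) (eMul (eMul eY eX) eY)); (eMul (eC (Posz 1)) (eMul eY eX)); (eMul (eC (Posz 1)) (eMul eX eY)); (eMul (eC (Posz 1)) eX)];
 [::];
 [::];
 [:: (eAdd (eMul (eC (Negz 0)) eY) (eMul (eC (Posz 1)) (eMul eX eY))); (eAdd (eMul (eC (Negz 0)) (eC (Posz 1))) (eMul (eC (Posz 1)) eX)); (eAdd (eMul (eC (Negz 0)) (eC (Posz 1))) (eMul (eC (Posz 1)) (eMul (eMul eY eX) eY))); (eAdd (eMul (eC (Negz 0)) eY) (eMul (eC (Posz 1)) (eMul eY eX)))];
 [::];
 [:: (eAdd (eMul (eC (Negz 0)) eY) (eMul (eC (Posz 1)) (eMul eY eX))); (eAdd (eMul (eC (Negz 0)) (eC (Posz 1))) (eMul (eC (Posz 1)) (eMul (eMul eY eX) eY))); (eAdd (eMul (eC (Negz 0)) (eC (Posz 1))) (eMul (eC (Posz 1)) eX)); (eAdd (eMul (eC (Negz 0)) eY) (eMul (eC (Posz 1)) (eMul eX eY)))];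
 [:: (eAdd (eMul (eC (Negz 0)) eY) (eMul (eC (Posz 1)) (eMul (eMul eY eX) eY))); (eAdd (eMul (eC (Negz 0)) (eC (Posz 1))) (eMul (eC (Posz 1)) (eMul eY eX))); (eAdd (eMul (eC (Negz 0)) (eC (Posz 1))) (eMul (eC (Posz 1)) (eMul eX eY))); (eAdd (eMul (eC (Posz 1)) eX) (eMul (eC (Negz 0)) eY))];
 [::];
 [::];
 [:: (eMul (eC (Posz 1)) eX); (eAdd (eMul (eC (Negz 0)) eX) (eMul (eC (Posz 1)) (eMul eX eY))); (eAdd (eMul (eC (Negz 0)) eX) (eMul (eC (Posz 1)) (eMul eY eX))); (eAdd (eMul (eC (Posz 1)) (eC (Posz 1))) (eMul (eC (Negz 0)) eX))];
 [:: (eMul (eC (Posz 1)) (eMul eX eY)); (eMul (eC (Posz 1)) eX); (eAdd (eMul (eC (Posz 1)) eY) (eMul (eC (Negz 0)) (eMul (eMul eX eY) eY))); (eAdd (eMul (eC (Posz 1)) (eC (Posz 1))) (eMul (eC (Negz 0)) (eMul eX eY)))];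
 [:: (eAdd (eMul (eC (Negz 0)) eX) (eMul (eC (Posz 1)) (eMul eX eY))); (eAdd (eMul (eC (Posz 2)) eX) (eMul (eC (Negz 0)) (eMul eX eY))); (eAdd (eMul (eC (Negz 0)) eX) (eMul (eC (Posz 1)) eY)); (eAdd (eMul (eC (Negz 0)) eY) (eMul (eC (Posz 1)) (eMul eY eX)))];
 [:: (eMul (eC (Posz 1)) (eMul eY eX)); (eAdd (eMul (eC (Posz 1)) eY) (eMul (eC (Negz 0)) (eMul (eMul eY eY) eX))); (eMul (eC (Posz 1)) eX); (eAdd (eMul (eC (Posz 1)) (eC (Posz 1))) (eMul (eC (Negz 0)) (eMul eY eX)))];
 [:: (eAdd (eMul (eC (Negz 0)) eX) (eMul (eC (Posz 1)) (eMul eY eX))); (eAdd (eMul (eC (Negz 0)) eX) (eMul (eC (Posz 1)) eY)); (eAdd (eMul (eC (Posz 2)) eX) (eMul (eC (Negz 0)) (eMul eY eX))); (eAdd (eMul (eC (Negz 0)) eY) (eMul (eC (Posz 1)) (eMul eX eY)))];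
 [:: (eAdd (eMul (eC (Negz 0)) eX) (eMul (eC (Posz 1)) eY)); (eAdd (eMul (eC (Negz 0)) (eC (Posz 1))) (eMul (eC (Posz 1)) (eMul eY eX))); (eAdd (eMul (eC (Negz 0)) (eC (Posz 1))) (eMul (eC (Posz 1)) (eMul eX eY))); (eAdd (eMul (eC (Negz 0)) eX) (eMul (eC (Posz 1)) (eMul (eMul eX eY) eX)))];
 [::];
 [:: (eMul (eC (Posz 1)) (eMul (eMul eY eX) eY)); (eMul (eC (Posz 1)) (eMul eY eX)); (eMul (eC (Posz 1)) (eMul eX eY)); (eMul (eC (Posz 1)) eX)];
 [::];
 [:: (eAdd (eMul (eC (Negz 0)) (eMul eX eY)) (eMul (eC (Posz 1)) (eMul (eMul eY eX) eY))); (eAdd (eMul (eC (Negz 0)) eX) (eMul (eC (Posz 1)) (eMul eY eX))); (eAdd (eMul (eC (Posz 2)) (eMul eX eY)) (eMul (eC (Negz 0)) (eMul (eMul eY eX) eY))); (eAdd (eMul (eC (Posz 2)) eX) (eMul (eC (Negz 0)) (eMul eY eX)))];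
 [:: (eAdd (eMul (eC (Negz 0)) eY) (eMul (eC (Posz 1)) (eMul eX eY))); (eAdd (eMul (eC (Negz 0)) (eC (Posz 1))) (eMul (eC (Posz 1)) eX)); (eAdd (eMul (eC (Negz 0)) (eMul eX eX)) (eMul (eC (Posz 1)) (eMul eY eX))); (eAdd (eMul (eC (Negz 0)) (eMul eX eY)) (eMul (eC (Posz 1)) (eMul eY eY)))];
 [:: (eAdd (eMul (eC (Negz 0)) (eMul eY eX)) (eMul (eC (Posz 1)) (eMul (eMul eY eX) eY))); (eAdd (eMul (eC (Posz 2)) (eMul eY eX)) (eMul (eC (Negz 0)) (eMul (eMul eY eX) eY))); (eAdd (eMul (eC (Negz 0)) eX) (eMul (eC (Posz 1)) (eMul eX eY))); (eAdd (eMul (eC (Posz 2)) eX) (eMul (eC (Negz 0)) (eMul eX eY)))];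
 [:: (eAdd (eMul (eC (Negz 0)) eY) (eMul (eC (Posz 1)) (eMul eY eX))); (eAdd (eMul (eC (Negz 0)) (eMul eX eX)) (eMul (eC (Posz 1)) (eMul eX eY))); (eAdd (eMul (eC (Negz 0)) (eC (Posz 1))) (eMul (eC (Posz 1)) eX)); (eAdd (eMul (eC (Negz 0)) (eMul eY eX)) (eMul (eC (Posz 1)) (eMul eY eY)))];
 [::];
 [:: (eAdd (eMul (eC (Negz 0)) eX) (eMul (eC (Posz 1)) (eMul eY eY))); (eAdd (eMul (eC (Posz 1)) (eMul eY eX)) (eMul (eC (Negz 0)) (eMul eY eY))); (eAdd (eMul (eC (Posz 1)) (eMul eX eY)) (eMul (eC (Negz 0)) (eMul eY eY))); (eAdd (eMul (eC (Posz 1)) eX) (eMul (eC (Negz 0)) eY))];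
 [::];
 [::];
 [::];
 [::];
 [::];
 [::];
 [:: (eMul (eC (Posz 1)) (eMul (eMul eX eY) eX)); (eMul (eC (Posz 1)) (eMul eX eY)); (eMul (eC (Posz 1)) (eMul eY eX)); (eMul (eC (Posz 1)) eY)];
 [:: (eMul (eC (Posz 1)) (eMul (eMul eX eY) eX)); (eMul (eC (Posz 1)) (eMul eX eY)); (eMul (eC (Posz 1)) (eMul eY eX)); (eMul (eC (Posz 1)) eY)];
 [::];
 [::];
 [::];
 [::];
 [::];
 [::];
 [:: (eAdd (eMul (eC (Posz 1)) (eC (Posz 1))) (eMul (eC (Negz 0)) eY)); (eAdd (eMul (eC (Posz 1)) eX) (eMul (eC (Negz 0)) (eMul eY eX))); (eAdd (eMul (eC (Posz 1)) eX) (eMul (eC (Negz 0)) (eMul eX eY))); (eMul (eC (Posz 1)) eY)];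
 [:: (eAdd (eMul (eC (Posz 1)) (eC (Posz 1))) (eMul (eC (Negz 0)) eY)); (eAdd (eMul (eC (Negz 0)) eY) (eMul (eC (Posz 1)) (eMul eX eY))); (eAdd (eMul (eC (Negz 0)) eY) (eMul (eC (Posz 1)) (eMul eY eX))); (eMul (eC (Posz 1)) eY)];
 [::];
 [::];
 [::];
 [::];
 [::];
 [::];
 [::];
 [::];
 [::];
 [::];
 [::];
 [::];
 [::];
 [::];
 [::];
 [::];
 [::];
 [::];
 [::];
 [::];
 [:: (eAdd (eMul (eC (Posz 1)) (eC (Posz 1))) (eMul (eC (Negz 0)) (eMul eX eY))); (eAdd (eMul (eC (Posz 1)) eY) (eMul (eC (Negz 0)) (eMul eX eY))); (eMul (eC (Posz 1)) eX); (eMul (eC (Posz 1)) (eMul eX eY))];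
 [::];
 [::];
 [:: (eAdd (eMul (eC (Posz 1)) (eMul eX eX)) (eMul (eC (Negz 0)) (eMul (eMul eY eX) eX))); (eAdd (eMul (eC (Posz 1)) eX) (eMul (eC (Negz 0)) (eMul eY eX))); (eAdd (eMul (eC (Posz 2)) (eMul eY eX)) (eMul (eC (Negz 0)) (eMul (eMul eX eY) eX))); (eAdd (eMul (eC (Negz 0)) eX) (eMul (eC (Posz 1)) (eMul (eMul eY eX) eX)))];
 [::];
 [::];
 [::];
 [::];
 [::];
 [:: (eAdd (eAdd (eMul (eC (Posz 1)) (eC (Posz 1))) (eMul (eC (Posz 1)) eY)) (eMul (eC (Negz 0)) (eMul eX eY))); (eAdd (eMul (eC (Negz 0)) eX) (eMul (eC (Posz 1)) (eMul eY eX))); (eAdd (eMul (eC (Negz 0)) (eC (Posz 1))) (eMul (eC (Posz 1)) eX)); (eAdd (eMul (eC (Negz 0)) eY) (eMul (eC (Posz 1)) (eMul eX eY)))];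
 [:: (eAdd (eMul (eC (Negz 0)) eX) (eMul (eC (Posz 1)) (eMul eY eX))); (eAdd (eMul (eC (Posz 2)) eY) (eMul (eC (Negz 0)) (eMul eX eY))); (eAdd (eMul (eC (Posz 1)) eX) (eMul (eC (Negz 0)) eY)); (eAdd (eMul (eC (Negz 0)) eY) (eMul (eC (Posz 1)) (eMul eX eY)))];
 [::];
 [::];
 [::];
 [::];
 [::];
 [:: (eAdd (eMul (eC (Negz 0)) eX) (eMul (eC (Posz 1)) (eMul eY eX))); (eAdd (eMul (eC (Negz 0)) (eC (Posz 1))) (eMul (eC (Posz 1)) eY)); (eMul (eC (Posz 1)) eX); (eAdd (eMul (eC (Negz 0)) eX) (eMul (eC (Posz 1)) (eMul eX eY)))];
 [:: (eAdd (eMul (eC (Negz 0)) eX) (eMul (eC (Posz 1)) (eMul eY eX))); (eAdd (eMul (eC (Negz 0)) (eC (Posz 1))) (eMul (eC (Posz 1)) eY)); (eAdd (eMul (eC (Posz 2)) eX) (eMul (eC (Negz 0)) (eMul eY eX))); (eAdd (eAdd (eMul (eC (Posz 1)) (eC (Posz 1))) (eMul (eC (Posz 1)) eX)) (eMul (eC (Negz 0)) (eMul eY eX)))];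
 [:: (eAdd (eMul (eC (Negz 0)) eX) (eMul (eC (Posz 1)) (eMul eY eX))); (eAdd (eMul (eC (Negz 0)) (eC (Posz 1))) (eMul (eC (Posz 1)) eY)); (eAdd (eMul (eC (Negz 0)) (eC (Posz 1))) (eMul (eC (Posz 1)) (eMul (eMul eX eY) eX))); (eAdd (eMul (eC (Negz 0)) eX) (eMul (eC (Posz 1)) (eMul eX eY)))];
 [:: (eAdd (eMul (eC (Negz 0)) eX) (eMul (eC (Posz 1)) (eMul eY eX))); (eAdd (eMul (eC (Negz 0)) (eC (Posz 1))) (eMul (eC (Posz 1)) eY)); (eAdd (eMul (eC (Posz 1)) (eMul eX eY)) (eMul (eC (Negz 0)) (eMul eY eY))); (eAdd (eMul (eC (Posz 1)) (eMul eX eX)) (eMul (eC (Negz 0)) (eMul eY eX)))];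
 [::];
 [::];
 [::];
 [::];
 [:: (eAdd (eAdd (eMul (eC (Posz 1)) (eC (Posz 1))) (eMul (eC (Posz 1)) eX)) (eMul (eC (Negz 0)) (eMul eX eY))); (eAdd (eMul (eC (Negz 0)) (eC (Posz 1))) (eMul (eC (Posz 1)) eY)); (eAdd (eMul (eC (Posz 2)) eX) (eMul (eC (Negz 0)) (eMul eX eY))); (eAdd (eMul (eC (Negz 0)) eX) (eMul (eC (Posz 1)) (eMul eX eY)))];
 [:: (eAdd (eAdd (eMul (eC (Posz 1)) eX) (eMul (eC (Posz 1)) eY)) (eMul (eC (Negz 0)) (eMul eX eY))); (eAdd (eMul (eC (Negz 0)) (eC (Posz 1))) (eMul (eC (Posz 1)) eY)); (eAdd (eMul (eC (Negz 0)) (eC (Posz 1))) (eMul (eC (Posz 1)) eX)); (eAdd (eAdd (eMul (eC (Posz 1)) eX) (eMul (eC (Posz 1)) eY)) (eMul (eC (Negz 0)) (eMul eY eX)))];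
 [:: (eAdd (eMul (eC (Posz 1)) (eMul eX eX)) (eMul (eC (Negz 0)) (eMul eX eY))); (eAdd (eMul (eC (Negz 0)) (eC (Posz 1))) (eMul (eC (Posz 1)) eY)); (eAdd (eMul (eC (Posz 1)) (eMul eY eX)) (eMul (eC (Negz 0)) (eMul eY eY))); (eAdd (eMul (eC (Negz 0)) eX) (eMul (eC (Posz 1)) (eMul eX eY)))];
 [:: (eAdd (eAdd (eMul (eC (Posz 1)) eX) (eMul (eC (Posz 1)) eY)) (eMul (eC (Negz 0)) (eMul eX eY))); (eAdd (eMul (eC (Negz 0)) (eC (Posz 1))) (eMul (eC (Posz 1)) eY)); (eAdd (eMul (eC (Posz 1)) eX) (eMul (eC (Negz 0)) eY)); (eAdd (eAdd (eMul (eC (Posz 1)) eX) (eMul (eC (Posz 1)) eY)) (eMul (eC (Negz 0)) (eMul eY eX)))];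
 [::];
 [::];
 [:: (eAdd (eMul (eC (Posz 1)) (eC (Posz 1))) (eMul (eC (Negz 0)) (eMul eY eX))); (eMul (eC (Posz 1)) eX); (eAdd (eMul (eC (Posz 1)) eY) (eMul (eC (Negz 0)) (eMul eY eX))); (eMul (eC (Posz 1)) (eMul eY eX))];
 [::];
 [::];
 [::];
 [::];
 [:: (eAdd (eMul (eC (Posz 1)) (eMul eX eX)) (eMul (eC (Negz 0)) (eMul (eMul eX eX) eY))); (eAdd (eMul (eC (Posz 2)) (eMul eX eY)) (eMul (eC (Negz 0)) (eMul (eMul eX eY) eX))); (eAdd (eMul (eC (Posz 1)) eX) (eMul (eC (Negz 0)) (eMul eX eY))); (eAdd (eMul (eC (Negz 0)) eX) (eMul (eC (Posz 1)) (eMul (eMul eX eX) eY)))];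
 [::];
 [::];
 [::];
 [:: (eAdd (eAdd (eMul (eC (Posz 1)) (eC (Posz 1))) (eMul (eC (Posz 1)) eY)) (eMul (eC (Negz 0)) (eMul eY eX))); (eAdd (eMul (eC (Negz 0)) (eC (Posz 1))) (eMul (eC (Posz 1)) eX)); (eAdd (eMul (eC (Negz 0)) eX) (eMul (eC (Posz 1)) (eMul eX eY))); (eAdd (eMul (eC (Negz 0)) eY) (eMul (eC (Posz 1)) (eMul eY eX)))];
 [::];
 [::];
 [:: (eAdd (eMul (eC (Negz 0)) eX) (eMul (eC (Posz 1)) (eMul eX eY))); (eAdd (eMul (eC (Posz 1)) eX) (eMul (eC (Negz 0)) eY)); (eAdd (eMul (eC (Posz 2)) eY) (eMul (eC (Negz 0)) (eMul eY eX))); (eAdd (eMul (eC (Negz 0)) eY) (eMul (eC (Posz 1)) (eMul eY eX)))];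
 [::];
 [::];
 [::];
 [:: (eAdd (eMul (eC (Negz 0)) eX) (eMul (eC (Posz 1)) (eMul eX eY))); (eMul (eC (Posz 1)) eX); (eAdd (eMul (eC (Negz 0)) (eC (Posz 1))) (eMul (eC (Posz 1)) eY)); (eAdd (eMul (eC (Negz 0)) eX) (eMul (eC (Posz 1)) (eMul eY eX)))];
 [:: (eAdd (eMul (eC (Negz 0)) eX) (eMul (eC (Posz 1)) (eMul eX eY))); (eAdd (eMul (eC (Posz 2)) eX) (eMul (eC (Negz 0)) (eMul eX eY))); (eAdd (eMul (eC (Negz 0)) (eC (Posz 1))) (eMul (eC (Posz 1)) eY)); (eAdd (eAdd (eMul (eC (Posz 1)) (eC (Posz 1))) (eMul (eC (Posz 1)) eX)) (eMul (eC (Negz 0)) (eMul eX eY)))];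
 [::];
 [::];
 [:: (eAdd (eMul (eC (Negz 0)) eX) (eMul (eC (Posz 1)) (eMul eX eY))); (eAdd (eMul (eC (Negz 0)) (eC (Posz 1))) (eMul (eC (Posz 1)) (eMul (eMul eX eY) eX))); (eAdd (eMul (eC (Negz 0)) (eC (Posz 1))) (eMul (eC (Posz 1)) eY)); (eAdd (eMul (eC (Negz 0)) eX) (eMul (eC (Posz 1)) (eMul eY eX)))];
 [:: (eAdd (eMul (eC (Negz 0)) eX) (eMul (eC (Posz 1)) (eMul eX eY))); (eAdd (eMul (eC (Posz 1)) (eMul eY eX)) (eMul (eC (Negz 0)) (eMul eY eY))); (eAdd (eMul (eC (Negz 0)) (eC (Posz 1))) (eMul (eC (Posz 1)) eY)); (eAdd (eMul (eC (Posz 1)) (eMul eX eX)) (eMul (eC (Negz 0)) (eMul eX eY)))];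
 [::];
 [::];
 [:: (eAdd (eAdd (eMul (eC (Posz 1)) (eC (Posz 1))) (eMul (eC (Posz 1)) eX)) (eMul (eC (Negz 0)) (eMul eY eX))); (eAdd (eMul (eC (Posz 2)) eX) (eMul (eC (Negz 0)) (eMul eY eX))); (eAdd (eMul (eC (Negz 0)) (eC (Posz 1))) (eMul (eC (Posz 1)) eY)); (eAdd (eMul (eC (Negz 0)) eX) (eMul (eC (Posz 1)) (eMul eY eX)))];
 [:: (eAdd (eAdd (eMul (eC (Posz 1)) eX) (eMul (eC (Posz 1)) eY)) (eMul (eC (Negz 0)) (eMul eY eX))); (eAdd (eMul (eC (Negz 0)) (eC (Posz 1))) (eMul (eC (Posz 1)) eX)); (eAdd (eMul (eC (Negz 0)) (eC (Posz 1))) (eMul (eC (Posz 1)) eY)); (eAdd (eAdd (eMul (eC (Posz 1)) eX) (eMul (eC (Posz 1)) eY)) (eMul (eC (Negz 0)) (eMul eX eY)))];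
 [::];
 [::];
 [:: (eAdd (eMul (eC (Posz 1)) (eMul eX eX)) (eMul (eC (Negz 0)) (eMul eY eX))); (eAdd (eMul (eC (Posz 1)) (eMul eX eY)) (eMul (eC (Negz 0)) (eMul eY eY))); (eAdd (eMul (eC (Negz 0)) (eC (Posz 1))) (eMul (eC (Posz 1)) eY)); (eAdd (eMul (eC (Negz 0)) eX) (eMul (eC (Posz 1)) (eMul eY eX)))];
 [:: (eAdd (eAdd (eMul (eC (Posz 1)) eX) (eMul (eC (Posz 1)) eY)) (eMul (eC (Negz 0)) (eMul eY eX))); (eAdd (eMul (eC (Posz 1)) eX) (eMul (eC (Negz 0)) eY)); (eAdd (eMul (eC (Negz 0)) (eC (Posz 1))) (eMul (eC (Posz 1)) eY)); (eAdd (eAdd (eMul (eC (Posz 1)) eX) (eMul (eC (Posz 1)) eY)) (eMul (eC (Negz 0)) (eMul eX eY)))];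
 [::];
 [:: (eMul (eC (Posz 1)) eX); (eMul (eC (Posz 1)) (eMul eX eY)); (eMul (eC (Posz 1)) (eMul eY eX)); (eMul (eC (Posz 1)) (eMul (eMul eY eX) eY))];
 [:: (eAdd (eMul (eC (Posz 1)) (eC (Posz 1))) (eMul (eC (Negz 0)) (eMul eY eX))); (eMul (eC (Posz 1)) eX); (eAdd (eMul (eC (Posz 1)) eY) (eMul (eC (Negz 0)) (eMul (eMul eY eY) eX))); (eMul (eC (Posz 1)) (eMul eY eX))];
 [:: (eAdd (eMul (eC (Posz 2)) eX) (eMul (eC (Negz 0)) (eMul eX eY))); (eAdd (eMul (eC (Negz 0)) eX) (eMul (eC (Posz 1)) (eMul eX eY))); (eAdd (eMul (eC (Posz 2)) (eMul eY eX)) (eMul (eC (Negz 0)) (eMul (eMul eY eX) eY))); (eAdd (eMul (eC (Negz 0)) (eMul eY eX)) (eMul (eC (Posz 1)) (eMul (eMul eY eX) eY)))];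
 [:: (eAdd (eMul (eC (Posz 1)) (eC (Posz 1))) (eMul (eC (Negz 0)) (eMul eX eY))); (eAdd (eMul (eC (Posz 1)) eY) (eMul (eC (Negz 0)) (eMul (eMul eX eY) eY))); (eMul (eC (Posz 1)) eX); (eMul (eC (Posz 1)) (eMul eX eY))];
 [:: (eAdd (eMul (eC (Posz 2)) eX) (eMul (eC (Negz 0)) (eMul eY eX))); (eAdd (eMul (eC (Posz 2)) (eMul eX eY)) (eMul (eC (Negz 0)) (eMul (eMul eY eX) eY))); (eAdd (eMul (eC (Negz 0)) eX) (eMul (eC (Posz 1)) (eMul eY eX))); (eAdd (eMul (eC (Negz 0)) (eMul eX eY)) (eMul (eC (Posz 1)) (eMul (eMul eY eX) eY)))];
 [:: (eAdd (eMul (eC (Negz 0)) eX) (eMul (eC (Posz 1)) (eMul (eMul eX eY) eX))); (eAdd (eMul (eC (Negz 0)) (eC (Posz 1))) (eMul (eC (Posz 1)) (eMul eX eY))); (eAdd (eMul (eC (Negz 0)) (eC (Posz 1))) (eMul (eC (Posz 1)) (eMul eY eX))); (eAdd (eMul (eC (Negz 0)) eX) (eMul (eC (Posz 1)) eY))];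
 [::];
 [:: (eAdd (eMul (eC (Posz 1)) (eC (Posz 1))) (eMul (eC (Negz 0)) eX)); (eAdd (eMul (eC (Negz 0)) eX) (eMul (eC (Posz 1)) (eMul eY eX))); (eAdd (eMul (eC (Negz 0)) eX) (eMul (eC (Posz 1)) (eMul eX eY))); (eMul (eC (Posz 1)) eX)];
 [::];
 [:: (eAdd (eMul (eC (Negz 0)) eY) (eMul (eC (Posz 1)) (eMul eX eY))); (eAdd (eMul (eC (Posz 2)) eX) (eMul (eC (Negz 0)) (eMul eY eX))); (eAdd (eMul (eC (Negz 0)) eX) (eMul (eC (Posz 1)) eY)); (eAdd (eMul (eC (Negz 0)) eX) (eMul (eC (Posz 1)) (eMul eY eX)))];
 [:: (eAdd (eMul (eC (Negz 0)) (eMul eY eX)) (eMul (eC (Posz 1)) (eMul eY eY))); (eAdd (eMul (eC (Negz 0)) (eC (Posz 1))) (eMul (eC (Posz 1)) eX)); (eAdd (eMul (eC (Negz 0)) (eMul eX eX)) (eMul (eC (Posz 1)) (eMul eX eY))); (eAdd (eMul (eC (Negz 0)) eY) (eMul (eC (Posz 1)) (eMul eY eX)))];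
 [:: (eAdd (eMul (eC (Negz 0)) eY) (eMul (eC (Posz 1)) (eMul eY eX))); (eAdd (eMul (eC (Negz 0)) eX) (eMul (eC (Posz 1)) eY)); (eAdd (eMul (eC (Posz 2)) eX) (eMul (eC (Negz 0)) (eMul eX eY))); (eAdd (eMul (eC (Negz 0)) eX) (eMul (eC (Posz 1)) (eMul eX eY)))];
 [:: (eAdd (eMul (eC (Negz 0)) (eMul eX eY)) (eMul (eC (Posz 1)) (eMul eY eY))); (eAdd (eMul (eC (Negz 0)) (eMul eX eX)) (eMul (eC (Posz 1)) (eMul eY eX))); (eAdd (eMul (eC (Negz 0)) (eC (Posz 1))) (eMul (eC (Posz 1)) eX)); (eAdd (eMul (eC (Negz 0)) eY) (eMul (eC (Posz 1)) (eMul eX eY)))];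
 [::];
 [:: (eAdd (eMul (eC (Posz 1)) eX) (eMul (eC (Negz 0)) eY)); (eAdd (eMul (eC (Posz 1)) (eMul eX eY)) (eMul (eC (Negz 0)) (eMul eY eY))); (eAdd (eMul (eC (Posz 1)) (eMul eY eX)) (eMul (eC (Negz 0)) (eMul eY eY))); (eAdd (eMul (eC (Negz 0)) eX) (eMul (eC (Posz 1)) (eMul eY eY)))];
 [::];
 [:: (eMul (eC (Posz 1)) eX); (eAdd (eMul (eC (Negz 0)) eX) (eMul (eC (Posz 1)) (eMul eX eY))); (eAdd (eMul (eC (Negz 0)) eX) (eMul (eC (Posz 1)) (eMul eY eX))); (eAdd (eMul (eC (Posz 1)) (eC (Posz 1))) (eMul (eC (Negz 0)) eX))];
 [:: (eAdd (eMul (eC (Negz 0)) eX) (eMul (eC (Posz 1)) (eMul eX eY))); (eMul (eC (Posz 1)) eX); (eAdd (eAdd (eMul (eC (Negz 0)) (eC (Posz 1))) (eMul (eC (Negz 0)) eX)) (eMul (eC (Posz 1)) eY)); (eAdd (eMul (eC (Negz 0)) eX) (eMul (eC (Posz 1)) (eMul eY eX)))];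
 [::];
 [:: (eAdd (eMul (eC (Negz 0)) eX) (eMul (eC (Posz 1)) (eMul eY eX))); (eAdd (eAdd (eMul (eC (Negz 0)) (eC (Posz 1))) (eMul (eC (Negz 0)) eX)) (eMul (eC (Posz 1)) eY)); (eMul (eC (Posz 1)) eX); (eAdd (eMul (eC (Negz 0)) eX) (eMul (eC (Posz 1)) (eMul eX eY)))];
 [::];
 [::];
 [:: (eAdd (eMul (eC (Negz 0)) eY) (eMul (eC (Posz 1)) (eMul eX eX))); (eAdd (eMul (eC (Negz 0)) (eMul eX eX)) (eMul (eC (Posz 1)) (eMul eX eY))); (eAdd (eMul (eC (Negz 0)) (eMul eX eX)) (eMul (eC (Posz 1)) (eMul eY eX))); (eAdd (eMul (eC (Negz 0)) eX) (eMul (eC (Posz 1)) eY))];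
 [:: (eAdd (eMul (eC (Posz 1)) (eC (Posz 1))) (eMul (eC (Negz 0)) eX)); (eAdd (eMul (eC (Negz 0)) eX) (eMul (eC (Posz 1)) (eMul eY eX))); (eAdd (eMul (eC (Negz 0)) eX) (eMul (eC (Posz 1)) (eMul eX eY))); (eMul (eC (Posz 1)) eX)];
 [::];
 [::];
 [:: (eAdd (eAdd (eMul (eC (Posz 1)) eX) (eMul (eC (Posz 1)) eY)) (eMul (eC (Negz 0)) (eMul eY eX))); (eAdd (eMul (eC (Negz 0)) (eC (Posz 1))) (eMul (eC (Posz 1)) eX)); (eAdd (eMul (eC (Negz 0)) eX) (eMul (eC (Posz 1)) eY)); (eAdd (eAdd (eMul (eC (Posz 1)) eX) (eMul (eC (Posz 1)) eY)) (eMul (eC (Negz 0)) (eMul eX eY)))];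
 [::];
 [:: (eAdd (eAdd (eMul (eC (Posz 1)) eX) (eMul (eC (Posz 1)) eY)) (eMul (eC (Negz 0)) (eMul eX eY))); (eAdd (eMul (eC (Negz 0)) eX) (eMul (eC (Posz 1)) eY)); (eAdd (eMul (eC (Negz 0)) (eC (Posz 1))) (eMul (eC (Posz 1)) eX)); (eAdd (eAdd (eMul (eC (Posz 1)) eX) (eMul (eC (Posz 1)) eY)) (eMul (eC (Negz 0)) (eMul eY eX)))];
 [:: (eAdd (eMul (eC (Negz 0)) eX) (eMul (eC (Posz 1)) eY)); (eAdd (eMul (eC (Negz 0)) (eMul eX eX)) (eMul (eC (Posz 1)) (eMul eY eX))); (eAdd (eMul (eC (Negz 0)) (eMul eX eX)) (eMul (eC (Posz 1)) (eMul eX eY))); (eAdd (eMul (eC (Negz 0)) eY) (eMul (eC (Posz 1)) (eMul eX eX)))];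
 [::]].
Definition repsL : seq nat := [:: 22; 23; 30; 31; 36; 37; 38; 39; 97; 98; 103; 107; 113; 114; 115; 118].

Definition allB4 : seq b4 := [seq decB4 n | n <- iota 0 16].
Lemma allB4P v : v \in allB4.
Proof. by case: v => [[[a b] c] d]; case: a; case: b; case: c; case: d; vm_compute. Qed.

Definition stepV (A B : b4) (L : seq b4) : seq b4 :=
  undup (L ++ map (mulB A) L ++ map (mulB B) L ++ [seq addB v w | v <- L, w <- L]).
Definition Vcl (t : ty) : seq b4 := iter 5 (stepV t.1 t.2) [:: oneB; zeroB].

Definition goodN n := nth false goodL n.
Definition repN n := nth 0%N repL n.

Definition checkV : bool := all (fun n => let t := decT n in let V := Vcl t in
   [&& oneB \in V, zeroB \in V,
       all (fun v => [&& mulB t.1 v \in V, mulB t.2 v \in V & all (fun w => addB v w \in V) V]) V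
     & goodN n || ~~ all (fun q => q \in V) allB4]) (iota 0 256).
Lemma checkV_ok : checkV = true. Proof. vm_compute. reflexivity. Qed.

Definition checkConj : bool := all (fun n => goodN n ==> (let t := decT n in let r := decT (repN n) in
   let g := nth oneB gL n in let gi := nth oneB giL n in
   [&& mulB gi g == oneB, mulB g gi == oneB, mulB (mulB gi t.1) g == r.1 & mulB (mulB gi t.2) g == r.2]))
   (iota 0 256).
Lemma checkConj_ok : checkConj = true. Proof. vm_compute. reflexivity. Qed.

Definition svN n k := nth 0 (nth [::] SVL n) k.
Definition evT (t : ty) e := evalT (toI t.1) (toI t.2) e.
Definition checkSV : bool := all (fun n => goodN n ==>
   all (fun k => evT (decT n) (nth eX SK k) == cst4 (svN n k)) (iota 0 9)) (iota 0 256).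
Lemma checkSV_ok : checkSV = true. Proof. vm_compute. reflexivity. Qed.

Definition checkSep : bool := all (fun n => all (fun m =>
   [&& goodN n, goodN m & repN n != repN m] ==>
   has (fun k => (svN n k - svN m k == 1) || (svN n k - svN m k == -1)) (iota 0 9)) (iota 0 256)) (iota 0 256).
Lemma checkSep_ok : checkSep = true. Proof. vm_compute. reflexivity. Qed.

Definition delta4 (r : nat) : i4 := nth (cst4 0) [:: (1,0,0,0); (0,1,0,0); (0,0,1,0); (0,0,0,1)] r.
Definition checkGen : bool := all (fun n => goodN n ==>
   all (fun r => evT (decT n) (nth eX (nth [::] genL n) r) == delta4 r) (iota 0 4)) (iota 0 256).
Lemma checkGen_ok : checkGen = true. Proof. vm_compute. reflexivity. Qed.

Lemma allIota (P : pred nat) N n : all P (iota 0 N) -> (n < N)%N -> P n.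
Proof. by move/allP => H Hn; apply: H; rewrite mem_iota. Qed.

Definition goodT (t : ty) := goodN (codeT t).
Definition repT (t : ty) := repN (codeT t).

Lemma SV_fact t k : goodT t -> (k < 9)%N -> evT t (nth eX SK k) = cst4 (svN (codeT t) k).
Proof.
move=> Hg Hk; have := allIota checkSV_ok (codeT_lt t); rewrite decT_code.
by move=> /implyP /(_ Hg) /allP /(_ k); rewrite mem_iota /= => /(_ Hk) /eqP.
Qed.

Lemma Sep_fact t u : goodT t -> goodT u -> repT t != repT u ->
  exists k, (k < 9)%N /\ ((svN (codeT t) k - svN (codeT u) k = 1) \/ (svN (codeT t) k - svN (codeT u) k = -1)).
Proof.
move=> Ht Hu Hr; have := allIota checkSep_ok (codeT_lt t) => /allP /(_ (codeT u)).
have Hin : codeT u \in iota 0 256 by rewrite mem_iota codeT_lt.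
move=> /(_ Hin) /implyP.
rewrite /goodT /repT in Ht Hu Hr; rewrite Ht Hu Hr => /(_ isT) /hasP [k].
rewrite mem_iota /= => Hk /orP [/eqP H|/eqP H]; exists k; split => //; by [left|right].
Qed.

Lemma Gen_fact t r : goodT t -> (r < 4)%N -> evT t (nth eX (nth [::] genL (codeT t)) r) = delta4 r.
Proof.
move=> Hg Hr; have := allIota checkGen_ok (codeT_lt t); rewrite decT_code.
by move=> /implyP /(_ Hg) /allP /(_ r); rewrite mem_iota /= => /(_ Hr) /eqP.
Qed.

Lemma scal4 a b c : mul4 (cst4 a) (add4 (cst4 b) (neg4 (cst4 c))) = cst4 (a * (b - c)).
Proof. by rewrite /= !oppr0 !addr0 !mulr0 !mul0r !addr0 add0r. Qed.

Lemma mxI_cst z : mxI (cst4 z) = z%:~R.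
Proof. by rewrite /= mx4_cst intz. Qed.

Lemma GenZ (A : pzRingType) (gens : seq A) a z : Gen gens a -> Gen gens (a *~ z).
Proof. by move=> H; rewrite -mulrzr; apply: GenM => //; apply: GenC. Qed.

Lemma Gen_sum (A : pzRingType) (gens : seq A) (I : Type) (r : seq I) (P : pred I) (F : I -> A) :
  (forall i, P i -> Gen gens (F i)) -> Gen gens (\sum_(i <- r | P i) F i).
Proof. by move=> H; apply: big_ind => //; [apply: Gen0 | move=> ? ?; apply: GenD]. Qed.

Section Core.
Variable k : nat.
Variables x y : M2Zk k.
Variable t : 'I_k -> ty.
Hypothesis Hxy : forall i, x i = mxI (toI (t i).1) /\ y i = mxI (toI (t i).2).
Hypothesis Hgood : forall i, goodT (t i).
Hypothesis Hrep : forall i j, i != j -> repT (t i) != repT (t j).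

Let G := Gen [:: x; y].

Lemma compE e i : (evalR x y e) i = mxI (evT (t i) e).
Proof. by rewrite evalR_ffun evalT_mx; case: (Hxy i) => -> ->. Qed.

Lemma pairSep i j : i != j -> exists v, G v /\ v i = 1 /\ v j = 0.
Proof.
move=> Hij; have [kk [Hk Hd]] := Sep_fact (Hgood i) (Hgood j) (Hrep Hij).
set d := svN (codeT (t i)) kk - svN (codeT (t j)) kk.
set e := eMul (eC d) (eAdd (nth eX SK kk) (eNeg (eC (svN (codeT (t j)) kk)))).
exists (evalR x y e); split; first by apply: Gen_eval.
rewrite !compE; have E2 tt : evT tt e = mul4 (cst4 d) (add4 (evT tt (nth eX SK kk)) (neg4 (cst4 (svN (codeT (t j)) kk)))) by [].
rewrite !E2 !SV_fact // !scal4 !mxI_cst subrr mulr0; split => //.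
by move: Hd; rewrite -/d => -[] ->.
Qed.

Lemma sepList i (J : seq 'I_k) : (forall j, j \in J -> j != i) ->
  exists w, G w /\ w i = 1 /\ forall j, j \in J -> w j = 0.
Proof.
elim: J => [|j J IH] HJ.
  exists 1; split; last by split => //; rewrite ffunE.
  by have := GenC [:: x; y] 1.
have [w [Gw [Wi WJ]]] : exists w, G w /\ w i = 1 /\ forall j, j \in J -> w j = 0.
  by apply: IH => j' Hj'; apply: HJ; rewrite inE Hj' orbT.
have [v [Gv [Vi Vj]]] : exists v, G v /\ v i = 1 /\ v j = 0.
  by apply: pairSep; rewrite eq_sym; apply: HJ; apply: mem_head.
exists (w * v); split; first by apply: GenM.
split; first by rewrite ffunE Wi Vi mulr1.
move=> j'; rewrite inE => /orP [/eqP ->|Hj']; rewrite ffunE.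
  by rewrite Vj mulr0.
by rewrite WJ // mul0r.
Qed.

Definition Ei (i : 'I_k) (m : 'M[int]_2) : M2Zk k := [ffun j => if j == i then m else 0].

Lemma GenEdelta i (r c : 'I_2) : G (Ei i (delta_mx r c)).
Proof.
have [w [Gw [Wi WJ]]] := @sepList i [seq j <- enum 'I_k | j != i]
  (fun j => ltac:(by rewrite mem_filter => /andP [])).
have Hn : (2 * r + c < 4)%N.
  by case: r => [[|[|r]] Hr] //; case: c => [[|[|c]] Hc].
set n := (2 * r + c)%N.
set e := nth eX (nth [::] genL (codeT (t i))) n.
have -> : Ei i (delta_mx r c) = w * evalR x y e.
  apply/ffunP => j; rewrite !ffunE; case: eqP => [->|/eqP Hji].
    rewrite Wi mul1r compE Gen_fact //; apply/matrixP => a b; rewrite !mxE /n /=.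
    move: Hn; clear e n; case: r => [[|[|r]] Hr] //; case: c => [[|[|c]] Hc] //;
      case: a => [[|[|a]] Ha] //; case: b => [[|[|b]] Hb] // => _; by rewrite /= !mxE.
  by rewrite WJ ?mul0r // mem_filter Hji mem_enum.
by apply: GenM => //; apply: Gen_eval.
Qed.

Lemma GenE i m : G (Ei i m).
Proof.
have -> : Ei i m = \sum_(r < 2) \sum_(c < 2) Ei i (delta_mx r c) *~ m r c.
  apply/ffunP => j; rewrite ffunE sum_ffunE; under eq_bigr do rewrite sum_ffunE.
  case: eqP => [->|/eqP Hji].
    rewrite [m in LHS]matrix_sum_delta; apply: eq_bigr => r _; apply: eq_bigr => c _.
    by rewrite ffunMzE ffunE eqxx -scaler_int intz.
  rewrite big1 // => r _; rewrite big1 // => c _; by rewrite ffunMzE ffunE (negbTE Hji) mul0rz.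
by apply: Gen_sum => r _; apply: Gen_sum => c _; apply: GenZ; apply: GenEdelta.
Qed.

Lemma core : ring_generates [:: x; y].
Proof.
move=> a; have -> : a = \sum_(i < k) Ei i (a i).
  apply/ffunP => j; rewrite sum_ffunE (bigD1 j) //= ffunE eqxx big1 ?addr0 // => i Hi.
  by rewrite ffunE eq_sym (negbTE Hi).
by apply: Gen_sum => i _; apply: GenE.
Qed.
End Core.

Lemma V_fact t : let V := Vcl t in
   [/\ oneB \in V, zeroB \in V,
       (forall v, v \in V -> [/\ mulB t.1 v \in V, mulB t.2 v \in V & forall w, w \in V -> addB v w \in V])
     & ~~ goodT t -> exists2 q, q \in allB4 & q \notin V].
Proof.
have := allIota checkV_ok (codeT_lt t); rewrite decT_code => /and4P [H1 H2 /allP H3 H4].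
split => //.
  by move=> v /H3 /and3P [-> -> /allP H]; split.
move=> Hg; move: H4; rewrite /goodT in Hg; rewrite (negbTE Hg) orFb => /allPn [q Hq Hn].
by exists q.
Qed.

Lemma conj_fact t : goodT t -> let r := decT (repT t) in
   let g := nth oneB gL (codeT t) in let gi := nth oneB giL (codeT t) in
   [/\ mulB gi g = oneB, mulB g gi = oneB, mulB (mulB gi t.1) g = r.1 & mulB (mulB gi t.2) g = r.2].
Proof.
move=> Hg; have := allIota checkConj_ok (codeT_lt t); rewrite decT_code /= => /implyP /(_ Hg).
by move=> /and4P [/eqP -> /eqP -> /eqP -> /eqP ->].
Qed.

Section Part1.
Variable k : nat.
Variables x y : M2Zk k.
Hypothesis Hx : entries01 x.
Hypothesis Hy : entries01 y.
Hypothesis H : F2alg_generates [:: red2 x; red2 y].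

Definition bitsOf (M : 'M[int]_2) : b4 := (M 0 0 == 1, M 0 1 == 1, M 1 0 == 1, M 1 1 == 1).
Definition tt (i : 'I_k) : ty := (bitsOf (x i), bitsOf (y i)).

Lemma bitsOfE (M : 'M[int]_2) : (forall r c, M r c = 0 \/ M r c = 1) -> M = mxI (toI (bitsOf M)).
Proof.
move=> HM; apply/matrixP => r c; rewrite !mxE.
have E a b : b2i (M a b == 1) = M a b by case: (HM a b) => ->.
case: r => [[|[|r]] Hr] //; case: c => [[|[|c]] Hc] //=; rewrite E; by congr (M _ _); apply/val_inj.
Qed.

Lemma Hxy i : x i = mxI (toI (tt i).1) /\ y i = mxI (toI (tt i).2).
Proof. by split; apply: bitsOfE => r c; [apply: Hx | apply: Hy]. Qed.

Lemma redx i : (red2 x) i = mxF (tt i).1.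
Proof. by rewrite ffunE {1}(Hxy i).1 red_toI. Qed.
Lemma redy i : (red2 y) i = mxF (tt i).2.
Proof. by rewrite ffunE {1}(Hxy i).2 red_toI. Qed.

Lemma Finv (P : M2F2k k -> Prop) :
  P 1 -> (forall m, P m -> P (red2 x * m)) -> (forall m, P m -> P (red2 y * m)) ->
  P 0 -> (forall a b, P a -> P b -> P (a + b)) -> (forall (c : 'F_2) a, P a -> P (c *: a)) ->
  forall a, P a.
Proof.
move=> P1 PX PY P0 PD PZ a; have [l [Hl ->]] := H a.
rewrite big_seq; apply: big_ind => // p /Hl Hw; apply: PZ; move: Hw; rewrite /word_eval.
elim: p.2 => [|g w IH] Hw; first by rewrite big_nil.
rewrite big_cons.
have Hg : g \in [:: red2 x; red2 y] by apply: Hw; rewrite mem_head.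
have Hm := IH (fun h Hh => Hw h (@mem_behead _ (g :: w) h Hh)).
by move: Hg; rewrite !inE => /orP [/eqP ->|/eqP ->]; [apply: PX|apply: PY].
Qed.

Lemma good_all i : goodT (tt i).
Proof.
apply/negPn/negP => Hng.
have [V1 V0 Vc Vg] := V_fact (tt i).
have [q _ Hq] := Vg Hng.
pose P (m : M2F2k k) := m i \in [seq mxF v | v <- Vcl (tt i)].
have HP : forall a, P a.
  apply: Finv; rewrite /P.
  - by rewrite ffunE -mxF_one; apply: map_f.
  - move=> m /mapP [v Hv Ev]; rewrite ffunE redx Ev -mxF_mul; apply: map_f.
    by have [] := Vc v Hv.
  - move=> m /mapP [v Hv Ev]; rewrite ffunE redy Ev -mxF_mul; apply: map_f.
    by have [] := Vc v Hv.
  - by rewrite ffunE -mxF_zero; apply: map_f.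
  - move=> a b /mapP [v Hv Ev] /mapP [w Hw Ew]; rewrite ffunE Ev Ew -mxF_add; apply: map_f.
    by have [_ _] := Vc v Hv; apply.
  - move=> c a /mapP [v Hv Ev]; rewrite ffunE Ev; case: (F2_cases c) => ->.
      by rewrite scale0r -mxF_zero; apply: map_f.
    by rewrite scale1r; apply: map_f.
have := HP [ffun j => if j == i then mxF q else 0]; rewrite /P ffunE eqxx.
by move=> /mapP [v Hv /mxF_inj Eq]; move: Hq; rewrite Eq Hv.
Qed.

Lemma rep_all i j : i != j -> repT (tt i) != repT (tt j).
Proof.
move=> Hij; apply/negP => /eqP Er.
have [Ci1 Ci2 Ci3 Ci4] := conj_fact (good_all i).
have [Cj1 Cj2 Cj3 Cj4] := conj_fact (good_all j).
set gi := nth oneB gL (codeT (tt i)) in Ci1 Ci2 Ci3 Ci4.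
set gii := nth oneB giL (codeT (tt i)) in Ci1 Ci2 Ci3 Ci4.
set gj := nth oneB gL (codeT (tt j)) in Cj1 Cj2 Cj3 Cj4.
set gji := nth oneB giL (codeT (tt j)) in Cj1 Cj2 Cj3 Cj4.
pose phi (g h : b4) (M : 'M['F_2]_2) := mxF h * M * mxF g.
have phiM g h M N : mulB g h = oneB -> phi g h (M * N) = phi g h M * phi g h N.
  move=> E; rewrite /phi -!mulrA; congr (_ * _); rewrite !mulrA; congr (_ * _ * _).
  by rewrite -mulrA -mxF_mul E mxF_one mulr1.
pose P (m : M2F2k k) := phi gi gii (m i) = phi gj gji (m j).
have HP : forall a, P a.
  apply: Finv; rewrite /P.
  - by rewrite !ffunE /phi !mulr1 -!mxF_mul Ci1 Cj1.
  - move=> m Hm; rewrite [(_ * m) i]ffunE [(_ * m) j]ffunE phiM // [in RHS]phiM // Hm !redx; congr (_ * _).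
    by rewrite /phi -!mxF_mul Ci3 Cj3 Er.
  - move=> m Hm; rewrite [(_ * m) i]ffunE [(_ * m) j]ffunE phiM // [in RHS]phiM // Hm !redy; congr (_ * _).
    by rewrite /phi -!mxF_mul Ci4 Cj4 Er.
  - by rewrite !ffunE /phi !mulr0 !mul0r.
  - by move=> a b Ha Hb; rewrite !ffunE /phi !mulrDr !mulrDl -/(phi _ _ _) -!/(phi gi gii _) Ha Hb.
  - by move=> c a Ha; rewrite !ffunE /phi -!scalerAr -!scalerAl; congr (_ *: _).
have := HP [ffun l => if l == i then 1 else 0]; rewrite /P !ffunE eqxx eq_sym (negbTE Hij).
rewrite /phi mulr1 mulr0 mul0r -mxF_mul Ci1 mxF_one => /eqP; by rewrite oner_eq0.
Qed.

Lemma part1 : ring_generates [:: x; y].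
Proof. exact: (core Hxy good_all rep_all). Qed.
End Part1.

Definition checkCode : bool := all (fun n => codeT (decT n) == n) (iota 0 256).
Lemma checkCode_ok : checkCode = true. Proof. vm_compute. reflexivity. Qed.

Definition checkReps : bool := all (fun a =>
  [&& (nth 0%N repsL a < 256)%N, goodN (nth 0%N repsL a) &
   all (fun b => (a != b) ==> (repN (nth 0%N repsL a) != repN (nth 0%N repsL b))) (iota 0 16)]) (iota 0 16).
Lemma checkReps_ok : checkReps = true. Proof. vm_compute. reflexivity. Qed.

Definition t16 (i : 'I_16) : ty := decT (nth 0%N repsL i).
Definition x16 : M2Zk 16 := [ffun i => mxI (toI (t16 i).1)].
Definition y16 : M2Zk 16 := [ffun i => mxI (toI (t16 i).2)].

Lemma codeT_dec n : (n < 256)%N -> codeT (decT n) = n.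
Proof. by move=> Hn; apply/eqP; apply: (allIota checkCode_ok Hn). Qed.

Lemma part2 : ring_generates [:: x16; y16].
Proof.
apply: (@core 16 x16 y16 t16).
- by move=> i; rewrite !ffunE.
- move=> i; have /and3P [H1 H2 _] := allIota checkReps_ok (ltn_ord i).
  by rewrite /goodT /t16 codeT_dec.
- move=> i j Hij; have /and3P [H1 _ /allP H3] := allIota checkReps_ok (ltn_ord i).
  have /and3P [H1' _ _] := allIota checkReps_ok (ltn_ord j).
  rewrite /repT /t16 !codeT_dec //.
  by have := H3 j; rewrite mem_iota ltn_ord /= => /(_ isT) /implyP; apply.
Qed.

Theorem mainTheorem19 :
  (forall (k : nat) (x y : M2Zk k),
      (1 <= k)%N ->
      entries01 x -> entries01 y ->
      F2alg_generates [:: red2 x; red2 y] ->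
      ring_generates [:: x; y])
  /\ (exists x y : M2Zk 16, ring_generates [:: x; y]).
Proof.
split.
  by move=> k x y _ Hx Hy H; apply: part1.
by exists x16, y16; apply: part2.
Qed.
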